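(* Let $n,l_1,u_1,l_2,u_2$ be non-negative integers and $(f(k))$, $(g(k))$ complex sequences such that the polynomial identity \[ \sum_{k=l_1}^{u_1}f(k)t^k(1-t)^{n-k}=\sum_{k=l_2}^{u_2}g(k)t^k \] holds for all complex $t$. Let $r,s\in\mathbb{C}\setminus\mathbb{Z}^{-}$ with $s\neq0$ and $r-s\notin\mathbb{Z}^{-}$. Then \[ \sum_{k=l_1}^{u_1}\frac{f(k)}{(k+s)\binom{n+r}{k+s}}=\sum_{k=l_2}^{u_2}\frac{g(k)}{(k+s)\binom{k+r}{k+s}}, \] and \[ \sum_{k=l_1}^{u_1}f(k)\frac{H_{n-k+r-s}-H_{n+r}}{(k+s)\binom{n+r}{k+s}}=\sum_{k=l_2}^{u_2}g(k)\frac{H_{r-s}-H_{k+r}}{(k+s)\binom{k+r}{k+s}}. \]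
   Context: $\mathbb{Z}^{-}$ denotes the set of negative integers. For complex $z$ not a negative integer, $H_z=\psi(z+1)+\gamma$ ($\psi$ the digamma function, $\gamma$ Euler's constant). Binomial coefficients with complex entries: $\binom{x}{y}=\frac{\Gamma(x+1)}{\Gamma(y+1)\Gamma(x-y+1)}$. *)

(* Defs.v *)
From Stdlib Require Import Reals Factorial ClassicalEpsilon.
From Coquelicot Require Import Coquelicot.
Open Scope R_scope.

Definition Cnat (k : nat) : C := RtoC (INR k).

Definition not_neg_int (z : C) : Prop := forall m : nat, z <> Copp (Cnat (S m)).

Definition Cexp (z : C) : C :=
  (exp (Re z) * cos (Im z), exp (Re z) * sin (Im z)).

Definition Cnatpow (m : nat) (z : C) : C := Cexp (Cmult z (RtoC (ln (INR m)))).

(* limit of a complex sequence (chosen by epsilon; meaningful when it converges) *)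
Definition Clim (u : nat -> C) : C :=
  epsilon (inhabits (RtoC 0)) (fun l => filterlim u eventually (locally l)).

(* complex derivative (chosen by epsilon; meaningful when f is C-differentiable at z) *)
Definition Cderiv (f : C -> C) (z : C) : C :=
  epsilon (inhabits (RtoC 0))
    (fun l => @is_derive C_AbsRing C_NormedModule f z l).

Fixpoint Cpoch1 (z : C) (m : nat) : C :=
  match m with
  | O => z
  | S m' => Cmult (Cpoch1 z m') (Cplus z (Cnat m))
  end.

(* Euler--Gauss definition of the Gamma function on C \ {0,-1,-2,...}:
   Gamma z = lim_m  m! m^z / (z (z+1) ... (z+m)) *)
Definition CGamma (z : C) : C :=
  Clim (fun m => Cdiv (Cmult (Cnat (Factorial.fact m)) (Cnatpow m z)) (Cpoch1 z m)).

Definition euler_gamma : R :=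
  real (Lim_seq (fun n => sum_n_m (fun k => / INR k) 1 n - ln (INR n))).

Definition digamma (z : C) : C := Cdiv (Cderiv CGamma z) (CGamma z).

Definition Harm (z : C) : C := Cplus (digamma (Cplus z (RtoC 1))) (RtoC euler_gamma).

Definition Cbinom (x y : C) : C :=
  Cdiv (CGamma (Cplus x (RtoC 1)))
       (Cmult (CGamma (Cplus y (RtoC 1))) (CGamma (Cplus (Cminus x y) (RtoC 1)))).

(* Main.v *)
Require Import Defs.
From Stdlib Require Import Reals Lra Lia Arith ClassicalEpsilon Factorial.
From Coquelicot Require Import Coquelicot.

Local Open Scope C_scope.

Ltac toC := match goal with |- @eq _ ?a ?b => change (@eq C a b) end.
Ltac gen_sums := repeat match goal with |- context [@sum_n_m C_AbelianMonoid ?a ?n ?m] => let X := fresh "X" in generalize (@sum_n_m C_AbelianMonoid a n m : C); intros X end.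
Ltac cring := toC; gen_sums; repeat change (@mult C_Ring ?a ?b) with (Cmult a b); repeat change (@plus C_AbelianMonoid ?a ?b) with (Cplus a b); ring.

Lemma S_ext (a b : nat -> C) n m : (forall k, a k = b k) -> sum_n_m a n m = sum_n_m b n m.
Proof. intros; now apply sum_n_m_ext. Qed.
Lemma S_ext_loc (a b : nat -> C) n m : (forall k, (n <= k <= m)%nat -> a k = b k) -> sum_n_m a n m = sum_n_m b n m.
Proof. intros; now apply sum_n_m_ext_loc. Qed.

Lemma S_plus (a b : nat -> C) n m :
  sum_n_m (fun k => a k + b k) n m = sum_n_m a n m + sum_n_m b n m.
Proof. exact (sum_n_m_plus a b n m). Qed.

Lemma S_mult_l (c : C) (a : nat -> C) n m :
  sum_n_m (fun k => c * a k) n m = c * sum_n_m a n m.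
Proof. exact (@sum_n_m_mult_l C_Ring c a n m). Qed.

Lemma S_minus (a b : nat -> C) n m :
  sum_n_m (fun k => a k - b k) n m = sum_n_m a n m - sum_n_m b n m.
Proof.
  transitivity (sum_n_m (fun k => a k + (-1) * b k) n m).
  { apply S_ext; intros; unfold Cminus; cring. }
  rewrite S_plus, S_mult_l. unfold Cminus; cring.
Qed.

Lemma S_nil (a : nat -> C) n m : (m < n)%nat -> sum_n_m a n m = (0:C).
Proof. intros; exact (sum_n_m_zero a n m H). Qed.

Lemma S_zero (a : nat -> C) n m : (forall k, (n <= k <= m)%nat -> a k = 0) ->
  sum_n_m a n m = (0:C).
Proof.
  intros H. rewrite (sum_n_m_ext_loc a (fun _ => zero)).
  - exact (@sum_n_m_const_zero C_AbelianMonoid n m).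
  - intros; apply H; auto.
Qed.

Lemma S_Sm (a : nat -> C) n m : (n <= S m)%nat ->
  sum_n_m a n (S m) = sum_n_m a n m + a (S m).
Proof. intros; exact (sum_n_Sm a n m H). Qed.

Lemma S_exchange (a : nat -> nat -> C) l u l' u' :
  sum_n_m (fun k => sum_n_m (fun j => a k j) l' u') l u =
  sum_n_m (fun j => sum_n_m (fun k => a k j) l u) l' u'.
Proof.
  induction u.
  - destruct l.
    + rewrite sum_n_n. apply S_ext; intros; now rewrite sum_n_n.
    + rewrite S_nil; [|lia]. symmetry; apply S_zero; intros.
      apply S_nil; lia.
  - destruct (le_lt_dec l (S u)).
    + rewrite S_Sm; [|lia]. rewrite IHu. rewrite <- S_plus.
      apply S_ext; intros. rewrite S_Sm; auto.
    + rewrite S_nil; [|lia]. symmetry; apply S_zero; intros.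
      apply S_nil; lia.
Qed.

Definition dl (k j : nat) : C := if Nat.eqb j k then 1 else 0.
Definition Top (c : nat -> C) (j : nat) : C :=
  c j - (match j with O => 0 | S j' => c j' end).
Fixpoint Tm (m : nat) (c : nat -> C) : nat -> C :=
  match m with O => c | S m' => Top (Tm m' c) end.

Lemma base_sum (P : nat -> C) k N : (k <= N)%nat ->
  sum_n_m (fun j => dl k j * P j) 0 N = P k.
Proof.
  induction N; intros Hk.
  - assert (k = 0)%nat by lia; subst. rewrite sum_n_n. unfold dl; simpl; cring.
  - rewrite S_Sm; [|lia]. destruct (Nat.eq_dec k (S N)).
    + subst. rewrite S_zero.
      * unfold dl. rewrite Nat.eqb_refl. cring.
      * intros j Hj. unfold dl. replace (Nat.eqb j (S N)) with false.
        cring. symmetry; apply Nat.eqb_neq; lia.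
    + rewrite IHN; [|lia]. unfold dl. replace (Nat.eqb (S N) k) with false.
      cring. symmetry; apply Nat.eqb_neq; lia.
Qed.

Definition Rec (Psi : nat -> nat -> C) :=
  forall k m, Psi k (S m) = Psi k m - Psi (S k) m.

Lemma main_T : forall m k (Psi : nat -> nat -> C) N, Rec Psi -> (k + m <= N)%nat ->
  sum_n_m (fun j => Tm m (dl k) j * Psi j 0%nat) 0 N = Psi k m.
Proof.
  induction m; intros k Psi N HR HN.
  - simpl. apply (base_sum (fun j => Psi j 0%nat)). lia.
  - simpl. unfold Top.
    transitivity (sum_n_m (fun j => Tm m (dl k) j * Psi j 0%nat) 0 N -
       sum_n_m (fun j => (match j with O => 0 | S j' => Tm m (dl k) j' end) * Psi j 0%nat) 0 N).
    { rewrite <- S_minus. apply S_ext; intros; cring. }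
    rewrite IHm; auto; [|lia].
    destruct N as [|N]; [lia|].
    rewrite sum_Sn_m; [|lia].
    rewrite <- sum_n_m_S.
    change (plus (0 * Psi 0%nat 0%nat) (sum_n_m (fun n0 : nat => Tm m (dl k) n0 * Psi (S n0) 0%nat) 0 N))
      with ((0 * Psi 0%nat 0%nat) + (sum_n_m (fun n0 : nat => Tm m (dl k) n0 * Psi (S n0) 0%nat) 0 N)).
    rewrite (IHm k (fun a b => Psi (S a) b) N); auto.
    + rewrite HR. cring.
    + intros a b. apply HR.
    + lia.
Qed.

Lemma pow_n_S (t : C) j : @pow_n C_Ring t (S j) = t * @pow_n C_Ring t j.
Proof. reflexivity. Qed.
Lemma pow_n_0 (t : C) : @pow_n C_Ring t 0 = (1:C).
Proof. reflexivity. Qed.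

Lemma Cmod_pow_n (t : C) j : Cmod (@pow_n C_Ring t j) = (Cmod t ^ j)%R.
Proof.
  induction j. - rewrite pow_n_0, Cmod_1. simpl; lra.
  - rewrite pow_n_S, Cmod_mult, IHj. simpl; lra.
Qed.

Lemma poly_split (c : nat -> C) (t : C) N :
  sum_n_m (fun j => c j * @pow_n C_Ring t j) 0 (S N) =
  c 0%nat + t * sum_n_m (fun j => c (S j) * @pow_n C_Ring t j) 0 N.
Proof.
  rewrite sum_Sn_m; [|lia]. rewrite <- sum_n_m_S. rewrite <- S_mult_l.
  change (plus ?a ?b) with (Cplus a b).
  rewrite pow_n_0. f_equal. cring.
  apply S_ext; intros; rewrite pow_n_S; cring.
Qed.

Lemma norm_S_le (a : nat -> C) n m :
  (Cmod (sum_n_m a n m) <= sum_n_m (fun k => Cmod (a k)) n m)%R.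
Proof.
  destruct (le_lt_dec n m).
  - induction m.
    + assert (n = 0)%nat by lia; subst. rewrite !sum_n_n. lra.
    + destruct (Nat.eq_dec n (S m)).
      * subst. rewrite !sum_n_n. lra.
      * rewrite S_Sm by lia. rewrite sum_n_Sm by lia.
        change (plus ?a ?b) with (Rplus a b).
        eapply Rle_trans. apply Cmod_triangle. specialize (IHm ltac:(lia)). lra.
  - rewrite S_nil by lia. rewrite sum_n_m_zero by lia. rewrite Cmod_0. change (@zero R_AbelianMonoid) with 0%R. lra.
Qed.

Lemma poly_zero : forall N (c : nat -> C),
  (forall t : C, t <> 0 -> sum_n_m (fun j => c j * @pow_n C_Ring t j) 0 N = (0:C)) ->
  forall j, (j <= N)%nat -> c j = 0.
Proof.
  induction N; intros c H j Hj.
  - assert (j = 0)%nat by lia; subst.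
    assert (H1 := H 1). rewrite sum_n_n in H1. rewrite pow_n_0 in H1.
    rewrite <- H1. cring. intro E. apply (f_equal fst) in E. simpl in E. lra.
  - set (B := sum_n_m (fun k => Cmod (c (S k))) 0 N).
    assert (HB0 : (0 <= B)%R).
    { unfold B. clear. induction N. rewrite sum_n_n. apply Cmod_ge_0.
      rewrite sum_n_Sm; [|lia]. change (plus ?a ?b) with (Rplus a b).
      pose proof (Cmod_ge_0 (c (S (S N)))). lra. }
    assert (Hb : forall x : R, (0 < x <= 1)%R -> (Cmod (c 0%nat) <= x * B)%R).
    { intros x Hx. assert (Hx0 : RtoC x <> 0).
      { intro E. apply (f_equal fst) in E. simpl in E. lra. }
      assert (E := H x Hx0). rewrite poly_split in E.
      set (Q := sum_n_m (fun j0 : nat => c (S j0) * @pow_n C_Ring (RtoC x) j0) 0 N) in *.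
      replace (c 0%nat) with (- (RtoC x * Q)).
      2:{ transitivity ((c 0%nat + RtoC x * Q) - RtoC x * Q). 2: ring. toC. rewrite E. ring. }
      rewrite Cmod_opp, Cmod_mult, Cmod_R, Rabs_pos_eq by lra.
      apply Rmult_le_compat_l; [lra|].
      eapply Rle_trans. apply norm_S_le. unfold B. apply sum_n_m_le.
      intros k. rewrite Cmod_mult, Cmod_pow_n, Cmod_R, Rabs_pos_eq by lra.
      rewrite <- (Rmult_1_r (Cmod (c (S k)))) at 2. apply Rmult_le_compat_l.
      apply Cmod_ge_0. clear -Hx. induction k; simpl. lra.
      rewrite <- (Rmult_1_r 1). apply Rmult_le_compat; try lra. apply pow_le; lra. }
    assert (H0 : c 0%nat = 0).
    { destruct (Ceq_dec (c 0%nat) 0) as [e|ne]; auto. exfalso.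
      assert (Hp : (0 < Cmod (c 0%nat))%R) by (apply Cmod_gt_0; auto).
      set (x := (Cmod (c 0%nat) / (Cmod (c 0%nat) + B + 1))%R).
      assert (Hx : (0 < x <= 1)%R).
      { unfold x. split. apply Rdiv_lt_0_compat; lra.
        apply Rmult_le_reg_r with (Cmod (c 0%nat) + B + 1)%R. lra.
        unfold Rdiv. rewrite Rmult_assoc, Rinv_l by lra. lra. }
      specialize (Hb x Hx). unfold x in Hb.
      assert (Cmod (c 0%nat) / (Cmod (c 0%nat) + B + 1) * B < Cmod (c 0%nat))%R.
      { apply Rmult_lt_reg_r with (Cmod (c 0%nat) + B + 1)%R. lra.
        unfold Rdiv. replace (Cmod (c 0%nat) * / (Cmod (c 0%nat) + B + 1) * B * (Cmod (c 0%nat) + B + 1))%R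
          with (Cmod (c 0%nat) * B * (/ (Cmod (c 0%nat) + B + 1) * (Cmod (c 0%nat) + B + 1)))%R by ring.
        rewrite Rinv_l by lra. nra. }
      lra. }
    destruct j as [|j]; auto.
    apply (IHN (fun k => c (S k))); [|lia].
    intros t Ht. specialize (H t Ht). rewrite poly_split, H0 in H.
    set (Q := sum_n_m (fun j0 : nat => c (S j0) * @pow_n C_Ring t j0) 0 N) in *.
    transitivity (/ t * (0 + t * Q)). 2:{ toC; rewrite H; ring. }
    toC. rewrite Cplus_0_l, Cmult_assoc, Cinv_l by auto. now rewrite Cmult_1_l.
Qed.

Lemma gen_repr (h : nat -> C) (mk : nat -> nat) l u N (Psi : nat -> nat -> C) :
  Rec Psi -> (forall k, (l <= k <= u)%nat -> (k + mk k <= N)%nat) ->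
  sum_n_m (fun k => h k * Psi k (mk k)) l u =
  sum_n_m (fun j => sum_n_m (fun k => h k * Tm (mk k) (dl k) j) l u * Psi j 0%nat) 0 N.
Proof.
  intros HR Hk.
  transitivity (sum_n_m (fun k => sum_n_m (fun j => h k * (Tm (mk k) (dl k) j * Psi j 0%nat)) 0 N) l u).
  { apply S_ext_loc. intros k Hk'. rewrite S_mult_l. f_equal.
    symmetry. apply main_T; auto. }
  rewrite S_exchange. apply S_ext. intros j.
  rewrite <- (@sum_n_m_mult_r C_Ring). apply S_ext. intros k. cring.
Qed.

Lemma transfer n l1 u1 l2 u2 (f g : nat -> C) (Hu1 : (u1 <= n)%nat)
  (Hid : forall t : C,
     sum_n_m (fun k => Cmult (Cmult (f k) (@pow_n C_Ring t k))
                             (@pow_n C_Ring (Cminus (RtoC 1) t) (n - k))) l1 u1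
     = sum_n_m (fun k => Cmult (g k) (@pow_n C_Ring t k)) l2 u2)
  (Psi : nat -> nat -> C) (HR : Rec Psi) :
  sum_n_m (fun k => f k * Psi k (n - k)%nat) l1 u1 = sum_n_m (fun k => g k * Psi k 0%nat) l2 u2.
Proof.
  set (N := (n + u2)%nat).
  assert (HL : forall Ps, Rec Ps -> sum_n_m (fun k => f k * Ps k (n - k)%nat) l1 u1 =
     sum_n_m (fun j => sum_n_m (fun k => f k * Tm (n - k)%nat (dl k) j) l1 u1 * Ps j 0%nat) 0 N).
  { intros Ps HPs. apply (gen_repr f (fun k => (n - k)%nat)); auto. intros; unfold N; lia. }
  assert (HRR : forall Ps, Rec Ps -> sum_n_m (fun k => g k * Ps k 0%nat) l2 u2 =
     sum_n_m (fun j => sum_n_m (fun k => g k * Tm 0 (dl k) j) l2 u2 * Ps j 0%nat) 0 N).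
  { intros Ps HPs. apply (gen_repr g (fun k => 0%nat)); auto. intros; unfold N; lia. }
  assert (Hc : forall j, (j <= N)%nat ->
     sum_n_m (fun k => f k * Tm (n - k)%nat (dl k) j) l1 u1 =
     sum_n_m (fun k => g k * Tm 0 (dl k) j) l2 u2).
  { intros j Hj.
    cut (sum_n_m (fun k => f k * Tm (n - k)%nat (dl k) j) l1 u1 -
     sum_n_m (fun k => g k * Tm 0 (dl k) j) l2 u2 = 0).
    { intros E. transitivity ((sum_n_m (fun k => f k * Tm (n - k)%nat (dl k) j) l1 u1 -
     sum_n_m (fun k => g k * Tm 0 (dl k) j) l2 u2) + sum_n_m (fun k => g k * Tm 0 (dl k) j) l2 u2).
      cring. rewrite E. cring. }
    revert j Hj.
    apply (poly_zero N (fun j => sum_n_m (fun k => f k * Tm (n - k)%nat (dl k) j) l1 u1 -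
     sum_n_m (fun k => g k * Tm 0 (dl k) j) l2 u2)).
    intros t _.
    set (Pt := fun a b => @pow_n C_Ring t a * @pow_n C_Ring (Cminus (RtoC 1) t) b).
    assert (HPt : Rec Pt).
    { intros a b. unfold Pt. rewrite !pow_n_S. cring. }
    specialize (Hid t).
    rewrite (S_ext _ (fun k => f k * Pt k (n - k)%nat)) in Hid.
    2:{ intros; unfold Pt; cring. }
    rewrite (S_ext (fun k => g k * @pow_n C_Ring t k) (fun k => g k * Pt k 0%nat)) in Hid.
    2:{ intros; unfold Pt; rewrite pow_n_0; cring. }
    rewrite HL, HRR in Hid by auto.
    transitivity (sum_n_m (fun j => sum_n_m (fun k => f k * Tm (n - k)%nat (dl k) j) l1 u1 * Pt j 0%nat) 0 N -
       sum_n_m (fun j => sum_n_m (fun k => g k * Tm 0 (dl k) j) l2 u2 * Pt j 0%nat) 0 N).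
    { rewrite <- S_minus. apply S_ext; intros; unfold Pt; rewrite pow_n_0; cring. }
    rewrite Hid. cring. }
  rewrite HL, HRR by auto. apply S_ext_loc. intros j Hj. rewrite Hc by lia. reflexivity.
Qed.


Local Open Scope C_scope.


Lemma Cmod_le_re_im (z : C) : (Cmod z <= Rabs (fst z) + Rabs (snd z))%R.
Proof.
  unfold Cmod. rewrite <- (sqrt_pow2 (Rabs (fst z) + Rabs (snd z))).
  2:{ pose proof (Rabs_pos (fst z)); pose proof (Rabs_pos (snd z)); lra. }
  apply sqrt_le_1_alt. rewrite <- (pow2_abs (fst z)), <- (pow2_abs (snd z)).
  pose proof (Rabs_pos (fst z)); pose proof (Rabs_pos (snd z)). nra.
Qed.

Lemma C_der_iff (f : C -> C) z l :
  @is_derive C_AbsRing C_NormedModule f z l <->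
  (forall eps, (0 < eps)%R -> exists del, (0 < del)%R /\ forall y, (Cmod (y - z) < del)%R ->
     (Cmod (f y - f z - (y - z) * l) <= eps * Cmod (y - z))%R).
Proof.
  split.
  - intros [_ H] eps Heps.
    specialize (H z (fun P HP => HP) (mkposreal eps Heps)).
    apply (@locally_le_locally_norm C_AbsRing (AbsRing_NormedModule C_AbsRing)) in H. destruct H as [d Hd].
    exists (pos d). split. apply cond_pos. intros y Hy. apply (Hd y Hy).
  - intros H. split. apply is_linear_scal_l.
    intros x Hx. apply (@is_filter_lim_locally_unique C_AbsRing (AbsRing_NormedModule C_AbsRing)) in Hx. subst x.
    intros eps. apply (@locally_norm_le_locally C_AbsRing (AbsRing_NormedModule C_AbsRing)).
    destruct (H (pos eps) (cond_pos eps)) as [d [Hd Hy]].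
    exists (mkposreal d Hd). intros y Hy'. apply (Hy y Hy').
Qed.

Lemma C_der_iff' (f : C -> C) z l :
  @is_derive C_AbsRing (AbsRing_NormedModule C_AbsRing) f z l <->
  (forall eps, (0 < eps)%R -> exists del, (0 < del)%R /\ forall y, (Cmod (y - z) < del)%R ->
     (Cmod (f y - f z - (y - z) * l) <= eps * Cmod (y - z))%R).
Proof.
  split.
  - intros [_ H] eps Heps.
    specialize (H z (fun P HP => HP) (mkposreal eps Heps)).
    apply (@locally_le_locally_norm C_AbsRing (AbsRing_NormedModule C_AbsRing)) in H. destruct H as [d Hd].
    exists (pos d). split. apply cond_pos. intros y Hy. apply (Hd y Hy).
  - intros H. split. apply is_linear_scal_l.
    intros x Hx. apply (@is_filter_lim_locally_unique C_AbsRing (AbsRing_NormedModule C_AbsRing)) in Hx. subst x.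
    intros eps. apply (@locally_norm_le_locally C_AbsRing (AbsRing_NormedModule C_AbsRing)).
    destruct (H (pos eps) (cond_pos eps)) as [d [Hd Hy]].
    exists (mkposreal d Hd). intros y Hy'. apply (Hy y Hy').
Qed.

Lemma isd_AR (f : C -> C) x l : @is_derive C_AbsRing (AbsRing_NormedModule C_AbsRing) f x l -> @is_derive C_AbsRing C_NormedModule f x l.
Proof. intros H. apply C_der_iff. apply C_der_iff'. exact H. Qed.
Lemma AR_isd (f : C -> C) x l : @is_derive C_AbsRing C_NormedModule f x l -> @is_derive C_AbsRing (AbsRing_NormedModule C_AbsRing) f x l.
Proof. intros H. apply C_der_iff'. apply C_der_iff. exact H. Qed.

Lemma R_der_iff (f : R -> R) z l :
  is_derive f z l <->
  (forall eps, (0 < eps)%R -> exists del, (0 < del)%R /\ forall y, (Rabs (y - z) < del)%R ->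
     (Rabs (f y - f z - (y - z) * l) <= eps * Rabs (y - z))%R).
Proof.
  split.
  - intros [_ H] eps Heps.
    specialize (H z (fun P HP => HP) (mkposreal eps Heps)).
    apply (@locally_le_locally_norm R_AbsRing (AbsRing_NormedModule R_AbsRing)) in H. destruct H as [d Hd].
    exists (pos d). split. apply cond_pos. intros y Hy. apply (Hd y Hy).
  - intros H. split. apply is_linear_scal_l.
    intros x Hx. apply (@is_filter_lim_locally_unique R_AbsRing (AbsRing_NormedModule R_AbsRing)) in Hx. subst x.
    intros eps. apply (@locally_norm_le_locally R_AbsRing (AbsRing_NormedModule R_AbsRing)).
    destruct (H (pos eps) (cond_pos eps)) as [d [Hd Hy]].
    exists (mkposreal d Hd). intros y Hy'. apply (Hy y Hy').
Qed.

Lemma im_le_Cmod' (c : C) : (Rabs (snd c) <= Cmod c)%R.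
Proof.
  unfold Cmod. rewrite <- (sqrt_pow2 (Rabs (snd c))) by apply Rabs_pos. apply sqrt_le_1_alt.
  rewrite <- (pow2_abs (snd c)). pose proof (pow2_ge_0 (fst c)). lra.
Qed.
Lemma re_le_Cmod' (c : C) : (Rabs (fst c) <= Cmod c)%R.
Proof. apply re_le_Cmod. Qed.

Lemma Cexp_add a b : Cexp (a + b) = Cexp a * Cexp b.
Proof.
  destruct a as [x1 y1], b as [x2 y2]. unfold Cexp, Cmult, Cplus, Re, Im; simpl.
  rewrite exp_plus, cos_plus, sin_plus. f_equal; ring.
Qed.

Lemma Cmod_Cexp z : Cmod (Cexp z) = exp (fst z).
Proof.
  destruct z as [x y]. unfold Cmod, Cexp, Re, Im; cbn [fst snd].
  replace ((exp x * cos y) ^ 2 + (exp x * sin y) ^ 2)%R with (exp x ^ 2)%R.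
  apply sqrt_pow2. apply Rlt_le, exp_pos.
  rewrite <- (Rmult_1_r (exp x ^ 2)), <- (sin2_cos2 y). unfold Rsqr. ring.
Qed.

Lemma Cexp_R (x : R) : Cexp (RtoC x) = RtoC (exp x).
Proof. unfold Cexp, RtoC, Re, Im; simpl. rewrite cos_0, sin_0. f_equal; ring. Qed.

Lemma Cexp_0 : Cexp 0 = 1.
Proof. rewrite Cexp_R, exp_0. reflexivity. Qed.

Lemma dpl_o f x l : derivable_pt_lim f x l -> forall eps, (0 < eps)%R ->
  exists del, (0 < del)%R /\ forall h, (Rabs h < del)%R -> (Rabs (f (x + h) - f x - l * h) <= eps * Rabs h)%R.
Proof.
  intros H eps Heps. destruct (H eps Heps) as [d Hd].
  exists (pos d). split. apply cond_pos. intros h Hh.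
  destruct (Req_dec h 0) as [->|Hn].
  - rewrite Rplus_0_r, Rabs_R0. replace (f x - f x - l * 0)%R with 0%R by ring. rewrite Rabs_R0. lra.
  - specialize (Hd h Hn Hh).
    replace (f (x + h) - f x - l * h)%R with (h * ((f (x + h) - f x) / h - l))%R by (field; auto).
    rewrite Rabs_mult. rewrite Rmult_comm. apply Rmult_le_compat_r. apply Rabs_pos. lra.
Qed.

Lemma Cexp_small eps : (0 < eps)%R -> exists del, (0 < del)%R /\
  forall h, (Cmod h < del)%R -> (Cmod (Cexp h - 1 - h) <= eps * Cmod h)%R.
Proof.
  intros He. set (e := Rmin (eps / 6) 1).
  assert (He0 : (0 < e)%R) by (unfold e; apply Rmin_glb_lt; lra).
  assert (He1 : (e <= eps / 6)%R) by apply Rmin_l.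
  assert (He2 : (e <= 1)%R) by apply Rmin_r.
  destruct (dpl_o _ _ _ derivable_pt_lim_exp_0 e He0) as [d1 [Hd1 H1]].
  destruct (dpl_o _ _ _ derivable_pt_lim_cos_0 e He0) as [d2 [Hd2 H2]].
  destruct (dpl_o _ _ _ derivable_pt_lim_sin_0 e He0) as [d3 [Hd3 H3]].
  exists (Rmin (Rmin d1 d2) (Rmin d3 (Rmin 1 (e / 4)))).
  split. { repeat apply Rmin_glb_lt; lra. }
  intros [x y] Hh.
  pose proof (re_le_Cmod' (x, y)) as Hx. pose proof (im_le_Cmod' (x, y)) as Hy. simpl in Hx, Hy.
  set (m := Cmod (x, y)) in *.
  assert (Hm1 : (m < d1)%R) by (eapply Rlt_le_trans; [apply Hh|]; repeat (apply Rle_trans with (1 := Rmin_l _ _) || apply Rmin_l || apply Rle_refl)).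
  assert (Hm : (m < Rmin d1 d2)%R /\ (m < Rmin d3 (Rmin 1 (e / 4)))%R).
  { split; eapply Rlt_le_trans; try apply Hh. apply Rmin_l. apply Rmin_r. }
  destruct Hm as [Hm Hm'].
  assert (Hxd1 : (Rabs x < d1)%R) by (pose proof (Rmin_l d1 d2); lra).
  assert (Hyd2 : (Rabs y < d2)%R) by (pose proof (Rmin_r d1 d2); lra).
  assert (Hyd3 : (Rabs y < d3)%R) by (pose proof (Rmin_l d3 (Rmin 1 (e / 4))); lra).
  assert (Hm1' : (m < 1)%R) by (pose proof (Rmin_r d3 (Rmin 1 (e / 4))); pose proof (Rmin_l 1 (e/4)); lra).
  assert (Hme : (m < e / 4)%R) by (pose proof (Rmin_r d3 (Rmin 1 (e / 4))); pose proof (Rmin_r 1 (e/4)); lra).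
  specialize (H1 x Hxd1). specialize (H2 y Hyd2). specialize (H3 y Hyd3).
  rewrite Rplus_0_l, exp_0 in H1. rewrite Rplus_0_l, cos_0 in H2. rewrite Rplus_0_l, sin_0 in H3.
  assert (Hex : (exp x <= 3)%R).
  { apply Rle_trans with (exp 1). destruct (Rle_lt_dec x 1).
    destruct (Req_dec x 1). subst; lra. apply Rlt_le, exp_increasing. lra.
    pose proof (Rle_abs x); lra. apply exp_le_3. }
  pose proof (exp_pos x) as Hexp.
  assert (Hre : (Rabs (exp x * cos y - 1 - x) <= 4 * e * m)%R).
  { replace (exp x * cos y - 1 - x)%R with ((exp x - 1 - 1 * x) + exp x * (cos y - 1 - 0 * y))%R by ring.
    eapply Rle_trans. apply Rabs_triang. rewrite Rabs_mult, (Rabs_pos_eq (exp x)) by lra.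
    assert (Rabs (cos y - 1 - 0 * y) <= e * m)%R by (eapply Rle_trans; [apply H2|]; apply Rmult_le_compat_l; lra).
    assert (exp x * Rabs (cos y - 1 - 0 * y) <= 3 * (e * m))%R.
    { apply Rmult_le_compat; try lra. apply Rabs_pos. }
    assert (Rabs (exp x - 1 - 1 * x) <= e * m)%R by (eapply Rle_trans; [apply H1|]; apply Rmult_le_compat_l; lra).
    lra. }
  assert (Him : (Rabs (exp x * sin y - y) <= 2 * e * m)%R).
  { replace (exp x * sin y - y)%R with ((exp x - 1) * sin y + (sin y - 0 - 1 * y))%R by ring.
    eapply Rle_trans. apply Rabs_triang. rewrite Rabs_mult.
    assert (Hs : (Rabs (sin y) <= 2 * m)%R).
    { replace (sin y) with ((sin y - 0 - 1 * y) + y)%R by ring. eapply Rle_trans. apply Rabs_triang.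
      assert (e * Rabs y <= m)%R by (apply Rle_trans with (1 * Rabs y)%R; [apply Rmult_le_compat_r; [apply Rabs_pos|lra]|lra]).
      lra. }
    assert (Hx1 : (Rabs (exp x - 1) <= 2 * m)%R).
    { replace (exp x - 1)%R with ((exp x - 1 - 1 * x) + x)%R by ring. eapply Rle_trans. apply Rabs_triang.
      assert (e * Rabs x <= m)%R by (apply Rle_trans with (1 * Rabs x)%R; [apply Rmult_le_compat_r; [apply Rabs_pos|lra]|lra]).
      lra. }
    assert (Rabs (exp x - 1) * Rabs (sin y) <= 2 * m * (2 * m))%R.
    { apply Rmult_le_compat; try apply Rabs_pos; lra. }
    assert (Rabs (sin y - 0 - 1 * y) <= e * m)%R by (eapply Rle_trans; [apply H3|]; apply Rmult_le_compat_l; lra).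
    assert (0 <= m)%R by (unfold m; apply Cmod_ge_0).
    nra. }
  eapply Rle_trans. apply Cmod_le_re_im. unfold Cexp, Re, Im; simpl.
  replace (exp x * cos y + - (1) + - x)%R with (exp x * cos y - 1 - x)%R by ring.
  replace (exp x * sin y + - (0) + - y)%R with (exp x * sin y - y)%R by ring.
  assert (0 <= m)%R by (unfold m; apply Cmod_ge_0).
  fold m. nra.
Qed.

Lemma is_derive_Cexp z : @is_derive C_AbsRing C_NormedModule Cexp z (Cexp z).
Proof.
  apply C_der_iff. intros eps He.
  assert (Hp : (0 < exp (fst z))%R) by apply exp_pos.
  destruct (Cexp_small (eps / exp (fst z))) as [d [Hd H]].
  { apply Rdiv_lt_0_compat; lra. }
  exists d. split; auto. intros y Hy.
  replace (Cexp y - Cexp z - (y - z) * Cexp z) with (Cexp z * (Cexp (y - z) - 1 - (y - z))).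
  2:{ assert (Ey : Cexp y = Cexp z * Cexp (y - z)) by (rewrite <- Cexp_add; f_equal; ring). rewrite Ey. ring. }
  rewrite Cmod_mult, Cmod_Cexp. specialize (H _ Hy).
  apply Rle_trans with (exp (fst z) * (eps / exp (fst z) * Cmod (y - z)))%R.
  apply Rmult_le_compat_l; lra. right. field. lra.
Qed.

Lemma Cmult_neq0 (a b : C) : a <> 0 -> b <> 0 -> a * b <> 0.
Proof.
  intros Ha Hb E. apply Ha. transitivity (a * b * / b). field; auto. rewrite E; ring.
Qed.

Lemma is_derive_Cinv (a : C) : a <> 0 -> @is_derive C_AbsRing C_NormedModule Cinv a (- (/ a * / a)).
Proof.
  intros Ha. apply C_der_iff. intros eps He.
  assert (Hm : (0 < Cmod a)%R) by (apply Cmod_gt_0; auto).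
  exists (Rmin (Cmod a / 2) (eps * Cmod a ^ 3 / 2)). split.
  { apply Rmin_glb_lt. lra. apply Rdiv_lt_0_compat; [|lra]. apply Rmult_lt_0_compat; auto. apply pow_lt; auto. }
  intros y Hy.
  assert (Hy1 : (Cmod (y - a) < Cmod a / 2)%R) by (eapply Rlt_le_trans; [apply Hy|apply Rmin_l]).
  assert (Hy2 : (Cmod (y - a) < eps * Cmod a ^ 3 / 2)%R) by (eapply Rlt_le_trans; [apply Hy|apply Rmin_r]).
  assert (Hyy : (Cmod a / 2 <= Cmod y)%R).
  { pose proof (Cmod_triangle y (a - y)). replace (y + (a - y)) with a in H by ring.
    replace (a - y) with (- (y - a)) in H by ring. rewrite Cmod_opp in H. lra. }
  assert (Hy0 : y <> 0). { intro E; subst. rewrite Cmod_0 in Hyy. lra. }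
  replace (/ y - / a - (y - a) * - (/ a * / a)) with ((y - a) * (y - a) * / (a * a * y)).
  2:{ field. auto. }
  rewrite !Cmod_mult, Cmod_inv, !Cmod_mult.
  2:{ repeat apply Cmult_neq0; auto. }
  assert (0 <= Cmod (y - a))%R by apply Cmod_ge_0.
  apply Rle_trans with (Cmod (y - a) * (eps * Cmod a ^ 3 / 2) * / (Cmod a * Cmod a * (Cmod a / 2)))%R.
  - apply Rmult_le_compat; try lra.
    + apply Rmult_le_pos; auto.
    + left. apply Rinv_0_lt_compat. apply Rmult_lt_0_compat. apply Rmult_lt_0_compat; auto. apply Cmod_gt_0; auto.
    + apply Rmult_le_compat_l; lra.
    + apply Rinv_le_contravar. apply Rmult_lt_0_compat. apply Rmult_lt_0_compat; auto. lra.
      apply Rmult_le_compat_l; [|lra]. apply Rmult_le_pos; lra.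
  - right. field. lra.
Qed.

Lemma proj_chain (pr : C -> R) (Hl : forall u v, pr (u - v) = (pr u - pr v)%R)
  (Hb : forall u, (Rabs (pr u) <= Cmod u)%R) (Hs : forall r u, pr (RtoC r * u) = (r * pr u)%R)
  (phi : C -> C) (L z d : C) (t : R) :
  @is_derive C_AbsRing C_NormedModule phi (z + RtoC t * d) L ->
  is_derive (fun s : R => pr (phi (z + RtoC s * d))) t (pr (L * d)).
Proof.
  intros H0. apply R_der_iff. intros eps He. pose proof (proj1 (C_der_iff phi (z + RtoC t * d) L) H0) as H.
  destruct (H (eps / (Cmod d + 1))%R) as [del [Hdel Hd]].
  { apply Rdiv_lt_0_compat; auto. pose proof (Cmod_ge_0 d); lra. }
  exists (del / (Cmod d + 1))%R. split.
  { apply Rdiv_lt_0_compat; auto. pose proof (Cmod_ge_0 d); lra. }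
  intros y Hy. pose proof (Cmod_ge_0 d).
  assert (E : z + RtoC y * d - (z + RtoC t * d) = RtoC (y - t) * d).
  { rewrite RtoC_minus. ring. }
  assert (Hc : (Cmod (z + RtoC y * d - (z + RtoC t * d)) < del)%R).
  { rewrite E, Cmod_mult, Cmod_R. apply Rle_lt_trans with (Rabs (y - t) * (Cmod d + 1))%R.
    apply Rmult_le_compat_l. apply Rabs_pos. lra.
    apply Rmult_lt_reg_r with (/ (Cmod d + 1))%R. apply Rinv_0_lt_compat; lra.
    rewrite Rmult_assoc, Rinv_r by lra. rewrite Rmult_1_r. apply Hy. }
  specialize (Hd _ Hc). rewrite E in Hd.
  replace (Rminus (Rminus (pr (phi (z + RtoC y * d)%C)) (pr (phi (z + RtoC t * d)%C))) (Rmult (y - t) (pr (L * d)%C)))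
    with (pr (phi (z + RtoC y * d) - phi (z + RtoC t * d) - RtoC (y - t) * d * L)).
  2:{ rewrite !Hl. f_equal. rewrite <- Hs. f_equal. ring. }
  eapply Rle_trans. apply Hb. eapply Rle_trans. apply Hd.
  rewrite Cmod_mult, Cmod_R.
  apply Rle_trans with (eps / (Cmod d + 1) * (Rabs (y - t) * (Cmod d + 1)))%R.
  apply Rmult_le_compat_l. left; apply Rdiv_lt_0_compat; lra.
  apply Rmult_le_compat_l. apply Rabs_pos. lra.
  right. field. lra.
Qed.

Lemma CMVT (phi phi' : C -> C) (z w : C) (M : R) :
  (forall t : R, (Rabs t <= 1)%R ->
     @is_derive C_AbsRing C_NormedModule phi (z + RtoC t * (w - z)) (phi' (z + RtoC t * (w - z))) /\
     (Cmod (phi' (z + RtoC t * (w - z))%C) <= M)%R) ->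
  (Cmod (phi w - phi z)%C <= 2 * M * Cmod (w - z)%C)%R.
Proof.
  intros H. set (d := w - z).
  assert (Hw : z + RtoC 1 * d = w) by (unfold d; ring).
  assert (Hz : z + RtoC 0 * d = z) by ring.
  assert (Gen : forall pr : C -> R, (forall u v, pr (u - v) = (pr u - pr v)%R) ->
     (forall u, (Rabs (pr u) <= Cmod u)%R) -> (forall r u, pr (RtoC r * u) = (r * pr u)%R) ->
     (Rabs (pr (phi w) - pr (phi z)) <= M * Cmod d)%R).
  { intros pr Hl Hb Hs.
    pose proof (bounded_variation (fun s => pr (phi (z + RtoC s * d)%C)) (fun s => pr (phi' (z + RtoC s * d)%C * d)%C)
       (M * Cmod d) 0 1) as BV.
    cbv beta in BV. rewrite Hw, Hz in BV. replace (Rabs (1 - 0)) with 1%R in BV by (rewrite Rminus_0_r, Rabs_R1; auto).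
    rewrite Rmult_1_r in BV. apply BV.
    intros t Ht. rewrite Rminus_0_r in Ht. destruct (H t Ht) as [Hd HM]. split.
    - apply proj_chain; auto.
    - eapply Rle_trans. apply Hb. rewrite Cmod_mult. apply Rmult_le_compat_r. apply Cmod_ge_0. auto. }
  assert (H1 := Gen fst). assert (H2 := Gen snd).
  assert (Hmc : (0 <= M * Cmod d)%R).
  { destruct (H 0%R) as [_ HM]. rewrite Rabs_R0; lra. pose proof (Cmod_ge_0 (phi' (z + RtoC 0 * (w - z)))).
    apply Rmult_le_pos. lra. apply Cmod_ge_0. }
  eapply Rle_trans. apply Cmod_le_re_im.
  replace (fst (phi w - phi z)%C) with (fst (phi w) - fst (phi z))%R by (simpl; ring).
  replace (snd (phi w - phi z)%C) with (snd (phi w) - snd (phi z))%R by (simpl; ring).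
  fold d.
  assert (A1 : (Rabs (fst (phi w) - fst (phi z)) <= M * Cmod d)%R).
  { apply H1. intros; simpl; ring. apply re_le_Cmod'. intros; simpl; ring. }
  assert (A2 : (Rabs (snd (phi w) - snd (phi z)) <= M * Cmod d)%R).
  { apply H2. intros; simpl; ring. apply im_le_Cmod'. intros; simpl; ring. }
  lra.
Qed.

Notation isd f x l := (@is_derive C_AbsRing C_NormedModule f x l).

Lemma Cd_ext (f g : C -> C) x l l' : (forall y, f y = g y) -> l = l' -> isd f x l -> isd g x l'.
Proof.
  intros H <- Hd. apply (is_derive_ext f g); auto.
Qed.
Lemma Cd_const (a x : C) : isd (fun _ => a) x (0:C).
Proof. exact (@is_derive_const C_AbsRing C_NormedModule a x). Qed.
Lemma Cd_id (x : C) : isd (fun y => y) x (1:C).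
Proof.
  apply C_der_iff. intros eps He. exists 1%R. split. lra. intros y _.
  replace (y - x - (y - x) * 1) with (RtoC 0) by ring. rewrite Cmod_0.
  apply Rmult_le_pos. lra. apply Cmod_ge_0.
Qed.
Lemma Cd_add f g x df dg : isd f x df -> isd g x dg -> isd (fun y => f y + g y) x (df + dg).
Proof. intros; exact (@is_derive_plus C_AbsRing C_NormedModule f g x df dg H H0). Qed.
Lemma Cd_sub f g x df dg : isd f x df -> isd g x dg -> isd (fun y => f y - g y) x (df - dg).
Proof. intros; exact (@is_derive_minus C_AbsRing C_NormedModule f g x df dg H H0). Qed.
Lemma Cd_mul f g x df dg : isd f x df -> isd g x dg -> isd (fun y => f y * g y) x (df * g x + f x * dg).
Proof.
  intros. apply isd_AR. exact (@is_derive_mult C_AbsRing f g x df dg (AR_isd _ _ _ H) (AR_isd _ _ _ H0) Cmult_comm).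
Qed.
Lemma Cd_comp f g x df dg : isd f (g x) df -> isd g x dg -> isd (fun y => f (g y)) x (dg * df).
Proof. intros; exact (@is_derive_comp C_AbsRing C_NormedModule f g x df dg H (AR_isd _ _ _ H0)). Qed.

Lemma Cexp_bound1 u : (Cmod u <= 1)%R -> (Cmod (Cexp u - 1) <= 6 * Cmod u)%R.
Proof.
  intros Hu.
  pose proof (CMVT (fun v => Cexp v - 1) Cexp 0 u 3) as H.
  assert (E : Cexp u - 1 = (Cexp u - 1) - (Cexp 0 - 1)) by (rewrite Cexp_0; ring). rewrite E.
  replace (6 * Cmod u)%R with (2 * 3 * Cmod (u - 0)%C)%R by (replace (u - 0)%C with u by ring; ring).
  apply H. replace (u - 0) with u by ring.
  intros t Ht. split.
  - apply (Cd_ext (fun v => Cexp v - 1) _ _ (Cexp (0 + RtoC t * u) - 0)). auto. cring.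
    apply Cd_sub. apply is_derive_Cexp. apply Cd_const.
  - rewrite Cmod_Cexp. apply Rle_trans with (exp 1); [|apply exp_le_3].
    assert (fst (0 + RtoC t * u)%C <= 1)%R.
    { eapply Rle_trans. apply Rle_abs. eapply Rle_trans. apply re_le_Cmod'.
      rewrite Cplus_0_l, Cmod_mult, Cmod_R. rewrite <- (Rmult_1_r 1).
      apply Rmult_le_compat; auto; try apply Rabs_pos; apply Cmod_ge_0. }
    destruct H0. left; apply exp_increasing; auto. rewrite H0; lra.
Qed.

Lemma Cexp_bound2 u : (Cmod u <= 1)%R -> (Cmod (Cexp u - 1 - u) <= 12 * Cmod u ^ 2)%R.
Proof.
  intros Hu.
  pose proof (CMVT (fun v => Cexp v - 1 - v) (fun v => Cexp v - 1) 0 u (6 * Cmod u)) as H.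
  assert (E : Cexp u - 1 - u = (Cexp u - 1 - u) - (Cexp 0 - 1 - 0)) by (rewrite Cexp_0; ring). rewrite E.
  replace (12 * Cmod u ^ 2)%R with (2 * (6 * Cmod u) * Cmod (u - 0)%C)%R by (replace (u - 0)%C with u by ring; ring).
  apply H. replace (u - 0) with u by ring.
  intros t Ht.
  assert (Hp : (Cmod (0 + RtoC t * u)%C <= Cmod u)%R).
  { rewrite Cplus_0_l, Cmod_mult, Cmod_R. rewrite <- (Rmult_1_l (Cmod u)) at 2.
    apply Rmult_le_compat_r; auto. apply Cmod_ge_0. }
  split.
  - apply (Cd_ext (fun v => Cexp v - 1 - v) _ _ (Cexp (0 + RtoC t * u) - 0 - 1)). auto. cring.
    apply Cd_sub. apply Cd_sub. apply is_derive_Cexp. apply Cd_const. apply Cd_id.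
  - eapply Rle_trans. apply Cexp_bound1. lra. lra.
Qed.

Definition Cseq_lim (u : nat -> C) (l : C) :=
  forall eps, (0 < eps)%R -> exists N, forall n, (N <= n)%nat -> (Cmod (u n - l) < eps)%R.

Lemma Cseq_lim_filterlim u l : Cseq_lim u l -> filterlim u eventually (locally l).
Proof.
  intros H P HP.
  pose proof (@locally_norm_le_locally C_AbsRing C_NormedModule l P HP) as HP'.
  destruct HP' as [e He]. destruct (H e (cond_pos e)) as [N HN].
  exists N. intros n Hn. apply He. apply HN; auto.
Qed.

Lemma filterlim_Cseq_lim u l : filterlim u eventually (locally l) -> Cseq_lim u l.
Proof.
  intros H eps He.
  assert (Hl : locally l (fun y : C => (Cmod (y - l) < eps)%R)).
  { apply (@locally_le_locally_norm C_AbsRing C_NormedModule). exists (mkposreal eps He).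
    intros y Hy. apply Hy. }
  destruct (H _ Hl) as [N HN]. exists N. auto.
Qed.

Lemma Cseq_lim_unique u l1 l2 : Cseq_lim u l1 -> Cseq_lim u l2 -> l1 = l2.
Proof.
  intros H1 H2. destruct (Ceq_dec l1 l2) as [e|n]; auto. exfalso.
  assert (Hp : (0 < Cmod (l1 - l2))%R) by (apply Cmod_gt_0; intro E; apply n; transitivity (l1 - l2 + l2); [ring|rewrite E; ring]).
  destruct (H1 _ (Rdiv_lt_0_compat _ 2 Hp ltac:(lra))) as [N1 HN1].
  destruct (H2 _ (Rdiv_lt_0_compat _ 2 Hp ltac:(lra))) as [N2 HN2].
  specialize (HN1 (N1 + N2)%nat ltac:(lia)). specialize (HN2 (N1 + N2)%nat ltac:(lia)).
  pose proof (Cmod_triangle (l1 - u (N1 + N2)%nat) (u (N1 + N2)%nat - l2)).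
  replace (l1 - u (N1 + N2)%nat + (u (N1 + N2)%nat - l2)) with (l1 - l2) in H by ring.
  replace (l1 - u (N1 + N2)%nat) with (- (u (N1 + N2)%nat - l1)) in H by ring.
  rewrite Cmod_opp in H. lra.
Qed.

Lemma Cseq_lim_sub a b A B : Cseq_lim a A -> Cseq_lim b B -> Cseq_lim (fun n => a n - b n) (A - B).
Proof.
  intros Ha Hb eps He.
  destruct (Ha (eps / 2)%R ltac:(lra)) as [N1 H1]. destruct (Hb (eps / 2)%R ltac:(lra)) as [N2 H2].
  exists (N1 + N2)%nat. intros n Hn.
  replace (a n - b n - (A - B)) with ((a n - A) - (b n - B)) by ring.
  eapply Rle_lt_trans. unfold Cminus at 1. apply Cmod_triangle. rewrite Cmod_opp.
  specialize (H1 n ltac:(lia)). specialize (H2 n ltac:(lia)). lra.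
Qed.

Lemma Cseq_lim_const (c : C) : Cseq_lim (fun _ => c) c.
Proof. intros eps He. exists 0%nat. intros. replace (c - c) with (RtoC 0) by ring. rewrite Cmod_0. auto. Qed.

Lemma Cseq_lim_bound a A N c : Cseq_lim a A -> (forall n, (N <= n)%nat -> (Cmod (a n) <= c)%R) -> (Cmod A <= c)%R.
Proof.
  intros Ha Hb. destruct (Rle_lt_dec (Cmod A) c) as [|Hlt]; auto. exfalso.
  destruct (Ha (Cmod A - c)%R ltac:(lra)) as [N1 H1].
  specialize (H1 (N + N1)%nat ltac:(lia)). specialize (Hb (N + N1)%nat ltac:(lia)).
  pose proof (Cmod_triangle (a (N + N1)%nat) (A - a (N + N1)%nat)).
  replace (a (N + N1)%nat + (A - a (N + N1)%nat)) with A in H by ring.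
  replace (A - a (N + N1)%nat) with (- (a (N + N1)%nat - A)) in H by ring. rewrite Cmod_opp in H. lra.
Qed.

Lemma C_cauchy (u : nat -> C) :
  (forall eps, (0 < eps)%R -> exists N, forall p q, (N <= p)%nat -> (N <= q)%nat -> (Cmod (u p - u q) <= eps)%R) ->
  exists l, Cseq_lim u l.
Proof.
  intros H.
  assert (Cr : forall pr : C -> R, (forall a b, pr (a - b) = (pr a - pr b)%R) -> (forall a, (Rabs (pr a) <= Cmod a)%R) ->
     { l | Un_cv (fun n => pr (u n)) l }).
  { intros pr Hl Hb. apply Rcomplete.R_complete. intros eps He.
    destruct (H (eps / 2)%R ltac:(lra)) as [N HN]. exists N. intros p q Hp Hq.
    unfold R_dist. rewrite <- Hl. eapply Rle_lt_trans. apply Hb. eapply Rle_lt_trans. apply HN; auto. lra. }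
  destruct (Cr fst) as [l1 H1]. intros; simpl; ring. apply re_le_Cmod'.
  destruct (Cr snd) as [l2 H2]. intros; simpl; ring. apply im_le_Cmod'.
  exists (l1, l2). intros eps He.
  destruct (H1 (eps / 2)%R ltac:(lra)) as [N1 HN1]. destruct (H2 (eps / 2)%R ltac:(lra)) as [N2 HN2].
  exists (N1 + N2)%nat. intros n Hn. eapply Rle_lt_trans. apply Cmod_le_re_im.
  specialize (HN1 n ltac:(lia)). specialize (HN2 n ltac:(lia)). unfold R_dist in *. simpl.
  replace (fst (u n) + - l1)%R with (fst (u n) - l1)%R by ring.
  replace (snd (u n) + - l2)%R with (snd (u n) - l2)%R by ring. lra.
Qed.

Lemma DL (h h' : nat -> C -> C) (Hf : C -> C) (z0 : C) (del : R) : (0 < del)%R ->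
  (forall m w, (Cmod (w - z0) < del)%R -> isd (h m) w (h' m w)) ->
  (forall w, (Cmod (w - z0) < del)%R -> Cseq_lim (fun m => h m w) (Hf w)) ->
  (forall eps, (0 < eps)%R -> exists N, forall p q w, (N <= p)%nat -> (N <= q)%nat ->
      (Cmod (w - z0) < del)%R -> (Cmod (h' p w - h' q w) <= eps)%R) ->
  exists L, isd Hf z0 L.
Proof.
  intros Hdel Hd Hl Hu.
  assert (Hz0 : (Cmod (z0 - z0) < del)%R) by (replace (z0 - z0) with (RtoC 0) by ring; rewrite Cmod_0; lra).
  destruct (C_cauchy (fun m => h' m z0)) as [L HL].
  { intros eps He. destruct (Hu eps He) as [N HN]. exists N. intros p q Hp Hq. apply HN; auto. }
  exists L. apply C_der_iff. intros eps He.
  set (e := (eps / 4)%R). assert (He' : (0 < e)%R) by (unfold e; lra).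
  destruct (Hu e He') as [N HN].
  destruct (proj1 (C_der_iff _ _ _) (Hd N z0 Hz0) e He') as [d1 [Hd1 HD1]].
  exists (Rmin del d1). split. apply Rmin_glb_lt; auto.
  intros y Hy.
  assert (Hyd : (Cmod (y - z0) < del)%R) by (eapply Rlt_le_trans; [apply Hy|apply Rmin_l]).
  assert (Hyd1 : (Cmod (y - z0) < d1)%R) by (eapply Rlt_le_trans; [apply Hy|apply Rmin_r]).
  pose proof (Cmod_ge_0 (y - z0)) as Hpos.
  assert (B1 : (Cmod ((Hf y - h N y) - (Hf z0 - h N z0)) <= 2 * e * Cmod (y - z0))%R).
  { apply (Cseq_lim_bound (fun p => (h p y - h N y) - (h p z0 - h N z0)) _ N).
    - apply Cseq_lim_sub; apply Cseq_lim_sub; auto; apply Cseq_lim_const.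
    - intros p Hp.
      pose proof (CMVT (fun v => h p v - h N v) (fun v => h' p v - h' N v) z0 y e) as M.
      apply M. intros t Ht.
      assert (Hin : (Cmod (z0 + RtoC t * (y - z0) - z0) < del)%R).
      { replace (z0 + RtoC t * (y - z0) - z0) with (RtoC t * (y - z0)) by ring.
        rewrite Cmod_mult, Cmod_R. eapply Rle_lt_trans; [|apply Hyd].
        rewrite <- (Rmult_1_l (Cmod (y - z0))) at 2. apply Rmult_le_compat_r; auto. }
      split.
      + apply Cd_sub; apply Hd; auto.
      + apply HN; auto. }
  assert (B3 : (Cmod (h' N z0 - L) <= e)%R).
  { apply (Cseq_lim_bound (fun p => h' N z0 - h' p z0) _ N).
    - apply Cseq_lim_sub; auto. apply Cseq_lim_const.
    - intros p Hp. apply HN; auto. }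
  specialize (HD1 y Hyd1).
  replace (Hf y - Hf z0 - (y - z0) * L) with
    (((Hf y - h N y) - (Hf z0 - h N z0)) + (h N y - h N z0 - (y - z0) * h' N z0) + (y - z0) * (h' N z0 - L)) by ring.
  eapply Rle_trans. apply Cmod_triangle. eapply Rle_trans. apply Rplus_le_compat_r. apply Cmod_triangle.
  rewrite Cmod_mult.
  assert (Cmod (y - z0) * Cmod (h' N z0 - L) <= Cmod (y - z0) * e)%R by (apply Rmult_le_compat_l; auto).
  unfold e in *. lra.
Qed.

Definition Gs (m : nat) (z : C) : C :=
  Cdiv (Cmult (Cnat (Factorial.fact m)) (Cnatpow m z)) (Cpoch1 z m).

Lemma CGamma_Gs z : CGamma z = Clim (fun m => Gs m z).
Proof. reflexivity. Qed.

Lemma Clim_eq u l : Cseq_lim u l -> Clim u = l.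
Proof.
  intros H. unfold Clim.
  assert (Ex : exists l, filterlim u eventually (locally l)) by (exists l; apply Cseq_lim_filterlim; auto).
  pose proof (epsilon_spec (inhabits (RtoC 0)) (fun l => filterlim u eventually (locally l)) Ex) as Hs.
  apply filterlim_Cseq_lim in Hs. eapply Cseq_lim_unique; eauto.
Qed.

Lemma Cinv_0 : / (RtoC 0) = 0.
Proof. unfold Cinv, RtoC; simpl. f_equal; unfold Rdiv; ring. Qed.

Lemma Cinv_mult_gen (a b : C) : / (a * b) = / a * / b.
Proof.
  destruct (Ceq_dec a 0) as [->|Ha]. rewrite Cmult_0_l, Cinv_0. ring.
  destruct (Ceq_dec b 0) as [->|Hb]. rewrite Cmult_0_r, Cinv_0. ring.
  field. auto.
Qed.

Lemma Cnat_S k : Cnat (S k) = Cnat k + 1.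
Proof. unfold Cnat. rewrite S_INR, RtoC_plus. reflexivity. Qed.

Lemma Cnat_0 : Cnat 0 = 0.
Proof. reflexivity. Qed.

Lemma Cnat_pos k : (1 <= k)%nat -> Cnat k <> 0.
Proof.
  intros Hk E. unfold Cnat in E. apply (f_equal fst) in E. simpl in E.
  apply (le_INR 1 k) in Hk. simpl in Hk. lra.
Qed.

Lemma Cnatpow_eq m z : Cnatpow m z = Cexp (z * RtoC (ln (INR m))).
Proof. reflexivity. Qed.

Lemma Cnatpow_S1 m z : (1 <= m)%nat -> Cnatpow m (z + 1) = Cnatpow m z * Cnat m.
Proof.
  intros Hm. rewrite !Cnatpow_eq.
  replace ((z + 1) * RtoC (ln (INR m))) with (z * RtoC (ln (INR m)) + RtoC (ln (INR m))) by ring.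
  rewrite Cexp_add, Cexp_R, exp_ln. reflexivity.
  apply (lt_INR 0 m). lia.
Qed.

Lemma Cnatpow_Sm m z : (1 <= m)%nat ->
  Cnatpow (S m) z = Cnatpow m z * Cexp (z * RtoC (ln (INR (S m)) - ln (INR m))).
Proof.
  intros Hm. rewrite !Cnatpow_eq, <- Cexp_add. f_equal. rewrite RtoC_minus. ring.
Qed.

Lemma Cmod_Cnatpow m z : Cmod (Cnatpow m z) = exp (fst z * ln (INR m)).
Proof. rewrite Cnatpow_eq, Cmod_Cexp. simpl. f_equal. ring. Qed.

Lemma Cpoch1_S z m : Cpoch1 z (S m) = Cpoch1 z m * (z + Cnat (S m)).
Proof. reflexivity. Qed.

Lemma Cpoch1_shift z m : Cpoch1 (z + 1) m * z = Cpoch1 z m * (z + Cnat (S m)).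
Proof.
  induction m.
  - simpl. unfold Cnat. simpl. ring.
  - rewrite !Cpoch1_S. transitivity (Cpoch1 (z + 1) m * z * (z + 1 + Cnat (S m))). ring.
    rewrite IHm. rewrite (Cnat_S (S m)). ring.
Qed.

Lemma Gs_shift m (w : C) : (1 <= m)%nat -> w <> 0 -> w + Cnat (S m) <> 0 ->
  Gs m (w + 1) = Gs m w * (Cnat m * w / (w + Cnat (S m))).
Proof.
  intros Hm Hw HwS. unfold Gs, Cdiv. rewrite Cnatpow_S1 by auto.
  pose proof (Cpoch1_shift w m) as E.
  destruct (Ceq_dec (Cpoch1 w m) 0) as [P0|P0].
  - rewrite P0, Cmult_0_l in E.
    assert (Cpoch1 (w + 1) m = 0).
    { transitivity (Cpoch1 (w + 1) m * w * / w). field; auto. rewrite E; ring. }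
    rewrite H, P0, Cinv_0. ring.
  - assert (Cpoch1 (w + 1) m = Cpoch1 w m * (w + Cnat (S m)) / w).
    { rewrite <- E. field. auto. }
    rewrite H. field. repeat split; auto.
Qed.

Lemma Cmod_Cnat k : Cmod (Cnat k) = INR k.
Proof. unfold Cnat. rewrite Cmod_R. apply Rabs_pos_eq, pos_INR. Qed.

Lemma nat_big (r : R) : exists N : nat, (r < INR N)%R.
Proof. destruct (INR_archimed 1 r) as [N HN]; [lra|]. exists N. lra. Qed.

Lemma Cmod_wS (w : C) m : (INR (S m) - Cmod w <= Cmod (w + Cnat (S m)))%R.
Proof.
  pose proof (Cmod_triangle (w + Cnat (S m)) (- w)).
  replace (w + Cnat (S m) + - w) with (Cnat (S m)) in H by ring.
  rewrite Cmod_opp, Cmod_Cnat in H. lra.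
Qed.

Lemma Cseq_lim_mul a b A B : Cseq_lim a A -> Cseq_lim b B -> Cseq_lim (fun n => a n * b n) (A * B).
Proof.
  intros Ha Hb eps He.
  pose proof (Cmod_ge_0 A). pose proof (Cmod_ge_0 B).
  destruct (Hb (Rmin 1 (eps / (2 * (Cmod A + 1))))) as [N1 H1].
  { apply Rmin_glb_lt. lra. apply Rdiv_lt_0_compat; lra. }
  destruct (Ha (eps / (2 * (Cmod B + 1)))%R) as [N2 H2]. { apply Rdiv_lt_0_compat; lra. }
  exists (N1 + N2)%nat. intros n Hn.
  specialize (H1 n ltac:(lia)). specialize (H2 n ltac:(lia)).
  replace (a n * b n - A * B) with ((a n - A) * b n + A * (b n - B)) by ring.
  eapply Rle_lt_trans. apply Cmod_triangle. rewrite !Cmod_mult.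
  assert (Hb1 : (Cmod (b n) <= Cmod B + 1)%R).
  { pose proof (Cmod_triangle (b n - B) B). replace (b n - B + B) with (b n) in H3 by ring.
    pose proof (Rmin_l 1 (eps / (2 * (Cmod A + 1)))). lra. }
  assert (Cmod (a n - A) * Cmod (b n) <= Cmod (a n - A) * (Cmod B + 1))%R.
  { apply Rmult_le_compat_l; try apply Cmod_ge_0; lra. }
  assert (Cmod (a n - A) * (Cmod B + 1) < eps / (2 * (Cmod B + 1)) * (Cmod B + 1))%R.
  { apply Rmult_lt_compat_r; lra. }
  assert (Cmod A * Cmod (b n - B) <= (Cmod A + 1) * (eps / (2 * (Cmod A + 1))))%R.
  { apply Rmult_le_compat; try apply Cmod_ge_0; try lra. pose proof (Rmin_r 1 (eps / (2 * (Cmod A + 1)))). lra. }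
  assert (eps / (2 * (Cmod B + 1)) * (Cmod B + 1) = eps / 2)%R by (field; lra).
  assert ((Cmod A + 1) * (eps / (2 * (Cmod A + 1))) = eps / 2)%R by (field; lra).
  lra.
Qed.

Lemma Cseq_lim_ext_ev u v l N : (forall n, (N <= n)%nat -> u n = v n) -> Cseq_lim u l -> Cseq_lim v l.
Proof.
  intros E H eps He. destruct (H eps He) as [N1 H1]. exists (N + N1)%nat. intros n Hn.
  rewrite <- E by lia. apply H1; lia.
Qed.

Lemma Cseq_lim_shift u l m0 : Cseq_lim (fun k => u (k + m0)%nat) l -> Cseq_lim u l.
Proof.
  intros H eps He. destruct (H eps He) as [N HN]. exists (N + m0)%nat. intros n Hn.
  replace n with ((n - m0) + m0)%nat by lia. apply HN. lia.
Qed.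

Lemma Cseq_lim_shift' u l m0 : Cseq_lim u l -> Cseq_lim (fun k => u (k + m0)%nat) l.
Proof.
  intros H eps He. destruct (H eps He) as [N HN]. exists N. intros n Hn. apply HN. lia.
Qed.

Lemma ratio1 (w : C) : Cseq_lim (fun m => Cnat m / (w + Cnat (S m))) 1.
Proof.
  intros eps He. pose proof (Cmod_ge_0 w). pose proof (Cmod_ge_0 (w + 1)).
  destruct (nat_big (2 * (Cmod w + 1) + 2 * Cmod (w + 1) / eps)) as [N HN].
  exists N. intros n Hn. apply le_INR in Hn.
  assert (0 <= 2 * Cmod (w + 1) / eps)%R by (apply Rmult_le_pos; [lra| left; apply Rinv_0_lt_compat; lra]).
  pose proof (Cmod_wS w n). rewrite S_INR in H2.
  assert (Hpos : ((INR n + 1) / 2 <= Cmod (w + Cnat (S n)))%R) by lra.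
  assert (Hnz : w + Cnat (S n) <> 0).
  { intro E. rewrite E, Cmod_0 in Hpos. lra. }
  replace (Cnat n / (w + Cnat (S n)) - 1) with (- (w + 1) / (w + Cnat (S n))).
  2:{ rewrite Cnat_S. field. rewrite <- Cnat_S. auto. }
  rewrite Cmod_div by auto. rewrite Cmod_opp.
  apply Rle_lt_trans with (Cmod (w + 1) / ((INR n + 1) / 2))%R.
  { apply Rmult_le_compat_l. lra. apply Rinv_le_contravar. lra. lra. }
  apply Rmult_lt_reg_r with ((INR n + 1) / 2)%R. lra.
  unfold Rdiv at 1. rewrite Rmult_assoc, Rinv_l by lra. rewrite Rmult_1_r.
  assert (HH : (2 * Cmod (w + 1) / eps < INR n + 1)%R) by lra.
  apply (Rmult_lt_compat_r eps) in HH; auto. unfold Rdiv in HH.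
  rewrite Rmult_assoc, Rinv_l, Rmult_1_r in HH by lra. lra.
Qed.

Lemma ratio2 (w : C) : Cseq_lim (fun m => (w + Cnat (S m)) / Cnat m) 1.
Proof.
  intros eps He. pose proof (Cmod_ge_0 (w + 1)).
  destruct (nat_big (1 + Cmod (w + 1) / eps)) as [N HN].
  exists N. intros n Hn. apply le_INR in Hn.
  assert (0 <= Cmod (w + 1) / eps)%R by (apply Rmult_le_pos; [lra| left; apply Rinv_0_lt_compat; lra]).
  assert (Hn0 : Cnat n <> 0). { apply Cnat_pos. apply (INR_le 1). simpl. lra. }
  replace ((w + Cnat (S n)) / Cnat n - 1) with ((w + 1) / Cnat n).
  2:{ rewrite Cnat_S. field. auto. }
  rewrite Cmod_div, Cmod_Cnat by auto.
  apply Rmult_lt_reg_r with (INR n). lra.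
  unfold Rdiv at 1. rewrite Rmult_assoc, Rinv_l by lra. rewrite Rmult_1_r.
  assert (HH : (Cmod (w + 1) / eps < INR n)%R) by lra.
  apply (Rmult_lt_compat_r eps) in HH; auto. unfold Rdiv in HH.
  rewrite Rmult_assoc, Rinv_l, Rmult_1_r in HH by lra. lra.
Qed.

Lemma ev_nonzero (w : C) : exists N, forall m, (N <= m)%nat -> (1 <= m)%nat /\ w + Cnat (S m) <> 0.
Proof.
  destruct (nat_big (Cmod w + 1)) as [N HN]. exists N. intros m Hm.
  apply le_INR in Hm. split.
  - apply INR_le. simpl. pose proof (Cmod_ge_0 w). lra.
  - intro E. pose proof (Cmod_wS w m). rewrite E, Cmod_0, S_INR in H. lra.
Qed.

Definition GConv (z : C) := exists l, Cseq_lim (fun m => Gs m z) l.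

Lemma GConv_lim z : GConv z -> Cseq_lim (fun m => Gs m z) (CGamma z).
Proof. intros [l Hl]. rewrite CGamma_Gs, (Clim_eq _ l Hl). auto. Qed.

Lemma conv_up (w : C) l : w <> 0 -> Cseq_lim (fun m => Gs m w) l -> Cseq_lim (fun m => Gs m (w + 1)) (l * w).
Proof.
  intros Hw H. destruct (ev_nonzero w) as [N HN].
  apply (Cseq_lim_ext_ev (fun m => Gs m w * (w * (Cnat m / (w + Cnat (S m))))) _ _ N).
  { intros n Hn. destruct (HN n Hn). rewrite Gs_shift by auto. f_equal. unfold Cdiv. ring. }
  replace (l * w) with (l * (w * 1)) by ring.
  apply Cseq_lim_mul; auto. apply Cseq_lim_mul. apply Cseq_lim_const. apply ratio1.
Qed.

Lemma conv_down (w : C) l : w <> 0 -> Cseq_lim (fun m => Gs m (w + 1)) l -> Cseq_lim (fun m => Gs m w) (l / w).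
Proof.
  intros Hw H. destruct (ev_nonzero w) as [N HN].
  apply (Cseq_lim_ext_ev (fun m => Gs m (w + 1) * ((w + Cnat (S m)) / Cnat m * / w)) _ _ N).
  { intros n Hn. destruct (HN n Hn). rewrite Gs_shift by auto. field. repeat split; auto. apply Cnat_pos; auto. }
  replace (l / w) with (l * (1 * / w)) by (unfold Cdiv; ring).
  apply Cseq_lim_mul; auto. apply Cseq_lim_mul. apply ratio2. apply Cseq_lim_const.
Qed.

Lemma Gamma_succ (w : C) : w <> 0 -> GConv w -> CGamma (w + 1) = w * CGamma w /\ GConv (w + 1).
Proof.
  intros Hw Hc. pose proof (conv_up w _ Hw (GConv_lim w Hc)) as H.
  split. rewrite CGamma_Gs, (Clim_eq _ _ H). ring. eexists; eauto.
Qed.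

Lemma Gamma_pred (w : C) : w <> 0 -> GConv (w + 1) -> CGamma w = CGamma (w + 1) / w /\ GConv w.
Proof.
  intros Hw Hc. pose proof (conv_down w _ Hw (GConv_lim _ Hc)) as H.
  split. rewrite CGamma_Gs, (Clim_eq _ _ H). reflexivity. eexists; eauto.
Qed.

Fixpoint Dp (m : nat) (w : C) : C :=
  match m with O => 1 | S m' => Dp m' w * (w + Cnat (S m')) + Cpoch1 w m' end.

Definition Lg (m : nat) (w : C) : C := RtoC (ln (INR m)) - Dp m w / Cpoch1 w m.

Lemma Cd_poch m w : isd (fun v => Cpoch1 v m) w (Dp m w).
Proof.
  induction m.
  - simpl. apply (Cd_ext (fun v => v) _ _ (1:C)); auto. apply Cd_id.
  - pose proof (Cd_mul (fun v => Cpoch1 v m) (fun v => v + Cnat (S m)) w _ _ IHm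
       (Cd_add (fun v => v) (fun _ => Cnat (S m)) w _ _ (Cd_id w) (Cd_const _ w))) as H.
    eapply Cd_ext; [| |apply H]. intros; reflexivity. simpl. cring.
Qed.

Lemma Cd_Gs m w : Cpoch1 w m <> 0 -> isd (Gs m) w (Gs m w * Lg m w).
Proof.
  intros HP. set (c := RtoC (ln (INR m))).
  assert (H1 : isd (fun v => Cnat (Factorial.fact m) * Cnatpow m v) w
                 (0 * Cnatpow m w + Cnat (Factorial.fact m) * ((1 * c + w * 0) * Cexp (w * c)))).
  { apply Cd_mul. apply Cd_const.
    apply (Cd_comp Cexp (fun v => v * c)). apply is_derive_Cexp. apply Cd_mul. apply Cd_id. apply Cd_const. }
  assert (H2 : isd (fun v => / Cpoch1 v m) w (Dp m w * - (/ Cpoch1 w m * / Cpoch1 w m))).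
  { apply (Cd_comp Cinv (fun v => Cpoch1 v m)). apply is_derive_Cinv; auto. apply Cd_poch. }
  pose proof (Cd_mul _ _ _ _ _ H1 H2) as H3.
  eapply Cd_ext; [| |apply H3].
  - intros y. unfold Gs, Cdiv. reflexivity.
  - unfold Gs, Lg, Cdiv. fold c. rewrite Cnatpow_eq. fold c. toC. field. auto.
Qed.

Lemma Lg_S m w : Cpoch1 w m <> 0 -> w + Cnat (S m) <> 0 ->
  Lg (S m) w = Lg m w + (RtoC (ln (INR (S m)) - ln (INR m)) - / (w + Cnat (S m))).
Proof.
  intros HP HS. unfold Lg. rewrite Cpoch1_S. simpl Dp. rewrite RtoC_minus. field. auto.
Qed.

Lemma Cnat_mult a b : Cnat (a * b) = Cnat a * Cnat b.
Proof. unfold Cnat. rewrite mult_INR, RtoC_mult. reflexivity. Qed.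

Definition rho (m : nat) (w : C) : C :=
  Cnat (S m) * Cexp (w * RtoC (ln (INR (S m)) - ln (INR m))) / (w + Cnat (S m)).

Lemma Gs_S m w : (1 <= m)%nat -> Cpoch1 w m <> 0 -> w + Cnat (S m) <> 0 ->
  Gs (S m) w = Gs m w * rho m w.
Proof.
  intros Hm HP HS. unfold Gs, rho. rewrite Cpoch1_S, Cnatpow_Sm by auto.
  rewrite fact_simpl, Cnat_mult. unfold Cdiv. field. auto.
Qed.

Lemma exp_le_mono x y : (x <= y)%R -> (exp x <= exp y)%R.
Proof. intros [H|H]. left; apply exp_increasing; auto. subst; lra. Qed.

Lemma ln1p_le y : (-1 < y)%R -> (ln (1 + y) <= y)%R.
Proof.
  intros Hy. rewrite <- (ln_exp y) at 2. apply ln_le. lra. apply exp_ineq1_le.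
Qed.

Lemma eps_bounds (x : R) : (1 <= x)%R ->
  (1 / (x + 1) <= ln (x + 1) - ln x <= 1 / x)%R.
Proof.
  intros Hx. split.
  - assert (ln x - ln (x + 1) <= - (1 / (x + 1)))%R.
    { rewrite <- ln_div by lra. replace (x / (x + 1))%R with (1 + - (1 / (x + 1)))%R by (field; lra).
      apply ln1p_le. assert (0 < 1 / (x + 1) < 1)%R. split. apply Rdiv_lt_0_compat; lra.
      apply Rmult_lt_reg_r with (x + 1)%R. lra. unfold Rdiv. rewrite Rmult_assoc, Rinv_l by lra. lra. lra. }
    lra.
  - rewrite <- ln_div by lra. replace ((x + 1) / x)%R with (1 + 1 / x)%R by (field; lra).
    apply ln1p_le. assert (0 < 1 / x)%R by (apply Rdiv_lt_0_compat; lra). lra.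
Qed.

Lemma Cmod_wj_lb (w : C) j : (1 / 2 <= fst w)%R -> (INR j + 1 / 2 <= Cmod (w + Cnat j))%R.
Proof.
  intros Hw. eapply Rle_trans; [|apply re_le_Cmod']. eapply Rle_trans; [|apply Rle_abs].
  unfold Cnat; simpl. lra.
Qed.

Lemma poch_lb (w : C) m : (1 / 2 <= fst w)%R -> (INR (Factorial.fact m) / 2 <= Cmod (Cpoch1 w m))%R.
Proof.
  intros Hw. induction m.
  - simpl. pose proof (Cmod_wj_lb w 0 Hw). rewrite Cnat_0, Cplus_0_r in H. simpl in H. lra.
  - rewrite Cpoch1_S, Cmod_mult, fact_simpl, mult_INR.
    pose proof (Cmod_wj_lb w (S m) Hw). pose proof (pos_INR (S m)).
    pose proof (INR_fact_lt_0 m).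
    replace (INR (S m) * INR (Factorial.fact m) / 2)%R with ((INR (Factorial.fact m) / 2) * INR (S m))%R by (unfold Rdiv; ring).
    apply Rmult_le_compat; lra.
Qed.

Lemma poch_nz (w : C) m : (1 / 2 <= fst w)%R -> Cpoch1 w m <> 0.
Proof.
  intros Hw E. pose proof (poch_lb w m Hw). rewrite E, Cmod_0 in H. pose proof (INR_fact_lt_0 m). lra.
Qed.

Lemma wS_nz (w : C) m : (1 / 2 <= fst w)%R -> w + Cnat m <> 0.
Proof.
  intros Hw E. pose proof (Cmod_wj_lb w m Hw). rewrite E, Cmod_0 in H. pose proof (pos_INR m). lra.
Qed.

Lemma inv_wS_bound (w : C) m : (1 / 2 <= fst w)%R -> (Cmod (/ (w + Cnat m)) <= 1 / (INR m + 1 / 2))%R.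
Proof.
  intros Hw. rewrite Cmod_inv by (apply wS_nz; auto). pose proof (Cmod_wj_lb w m Hw).
  pose proof (pos_INR m). unfold Rdiv. rewrite Rmult_1_l. apply Rinv_le_contravar; lra.
Qed.

Lemma Dp_bound (w : C) m : (1 / 2 <= fst w)%R -> (Cmod (Dp m w / Cpoch1 w m) <= 2 * INR (S m))%R.
Proof.
  intros Hw. induction m.
  - replace (Dp 0 w / Cpoch1 w 0) with (/ (w + Cnat 0)).
    2:{ simpl. unfold Cnat; simpl. unfold Cdiv. rewrite Cplus_0_r. ring. }
    eapply Rle_trans. apply inv_wS_bound; auto. simpl. lra.
  - replace (Dp (S m) w / Cpoch1 w (S m)) with (Dp m w / Cpoch1 w m + / (w + Cnat (S m))).
    2:{ rewrite Cpoch1_S. simpl Dp. field. split. apply wS_nz; auto. apply poch_nz; auto. }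
    eapply Rle_trans. apply Cmod_triangle. pose proof (inv_wS_bound w (S m) Hw).
    pose proof (pos_INR (S m)).
    assert (1 / (INR (S m) + 1 / 2) <= 2)%R.
    { apply Rmult_le_reg_r with (INR (S m) + 1 / 2)%R. lra. unfold Rdiv. rewrite Rmult_1_l, Rinv_l by lra. lra. }
    rewrite (S_INR (S m)). lra.
Qed.

Lemma Gs_bound0 (w : C) m A : (1 / 2 <= fst w)%R -> (Cmod w <= A)%R -> (1 <= m)%nat ->
  (Cmod (Gs m w) <= 2 * exp (A * ln (INR m)))%R.
Proof.
  intros Hw HA Hm. unfold Gs. rewrite Cmod_div by (apply poch_nz; auto).
  rewrite Cmod_mult, Cmod_Cnat, Cmod_Cnatpow.
  pose proof (poch_lb w m Hw). pose proof (INR_fact_lt_0 m).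
  assert (Hl : (0 <= ln (INR m))%R).
  { rewrite <- ln_1. apply ln_le. lra. apply (le_INR 1). auto. }
  assert (exp (fst w * ln (INR m)) <= exp (A * ln (INR m)))%R.
  { apply exp_le_mono. apply Rmult_le_compat_r; auto. eapply Rle_trans. apply Rle_abs.
    eapply Rle_trans. apply re_le_Cmod'. auto. }
  pose proof (exp_pos (fst w * ln (INR m))).
  apply Rle_trans with (INR (Factorial.fact m) * exp (A * ln (INR m)) / (INR (Factorial.fact m) / 2))%R.
  - unfold Rdiv. apply Rmult_le_compat. apply Rmult_le_pos; lra. left; apply Rinv_0_lt_compat; lra.
    apply Rmult_le_compat_l; lra. apply Rinv_le_contravar; lra.
  - right. field. lra.
Qed.

Lemma alg_id (w X E c : C) : w + X <> 0 ->
  X * c / (w + X) - 1 = (X * (c - 1 - w * E) + w * (X * E - 1)) / (w + X).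
Proof. intros H. field. auto. Qed.

Lemma rho_bound (w : C) m A : (1 / 2 <= fst w)%R -> (Cmod w <= A)%R -> (1 <= m)%nat -> (A <= INR m)%R ->
  (Cmod (rho m w - 1) <= 2 * (12 * A ^ 2 + A) / (INR m * INR (S m)))%R.
Proof.
  intros Hw HA Hm HAm.
  set (x := INR m) in *. assert (Hx : (1 <= x)%R) by (apply (le_INR 1); auto).
  assert (HS : INR (S m) = (x + 1)%R) by (apply S_INR).
  set (e := (ln (INR (S m)) - ln x)%R).
  assert (He : (1 / (x + 1) <= e <= 1 / x)%R) by (unfold e; rewrite HS; apply eps_bounds; auto).
  assert (HA0 : (0 <= A)%R) by (pose proof (Cmod_ge_0 w); lra).
  set (u := w * RtoC e).
  assert (Hu : (Cmod u <= A / x)%R).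
  { unfold u. rewrite Cmod_mult, Cmod_R, Rabs_pos_eq.
    apply Rle_trans with (A * (1 / x))%R. apply Rmult_le_compat; try lra. apply Cmod_ge_0.
    assert (0 < 1 / (x + 1))%R by (apply Rdiv_lt_0_compat; lra). lra.
    right; unfold Rdiv; ring.
    assert (0 < 1 / (x + 1))%R by (apply Rdiv_lt_0_compat; lra). lra. }
  assert (Hu1 : (Cmod u <= 1)%R).
  { eapply Rle_trans. apply Hu. apply Rmult_le_reg_r with x. lra. unfold Rdiv. rewrite Rmult_assoc, Rinv_l by lra. lra. }
  pose proof (Cexp_bound2 u Hu1) as Hex.
  assert (HwS : w + Cnat (S m) <> 0) by (apply wS_nz; auto).
  assert (HCS : Cnat (S m) = RtoC (x + 1)) by (unfold Cnat; rewrite HS; auto).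
  replace (rho m w - 1) with ((Cnat (S m) * (Cexp u - 1 - u) + w * RtoC ((x + 1) * e - 1)) / (w + Cnat (S m))).
  2:{ assert (Er : rho m w = Cnat (S m) * Cexp u / (w + Cnat (S m))) by reflexivity.
      rewrite Er. rewrite RtoC_minus, RtoC_mult, <- HCS.
      rewrite (alg_id w (Cnat (S m)) (RtoC e) (Cexp u)) by auto. reflexivity. }
  rewrite Cmod_div by auto.
  assert (HD : (x + 1 <= Cmod (w + Cnat (S m)))%R) by (pose proof (Cmod_wj_lb w (S m) Hw); lra).
  assert (He2 : (0 <= (x + 1) * e - 1 <= 1 / x)%R).
  { split.
    - assert ((x + 1) * (1 / (x + 1)) = 1)%R by (field; lra).
      assert ((x + 1) * (1 / (x + 1)) <= (x + 1) * e)%R by (apply Rmult_le_compat_l; lra). lra.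
    - assert ((x + 1) * e <= (x + 1) * (1 / x))%R by (apply Rmult_le_compat_l; lra).
      assert ((x + 1) * (1 / x) = 1 + 1 / x)%R by (field; lra). lra. }
  assert (HN : (Cmod (Cnat (S m) * (Cexp u - 1 - u) + w * RtoC ((x + 1) * e - 1)) <=
                (x + 1) * (12 * (A / x) ^ 2) + A * (1 / x))%R).
  { eapply Rle_trans. apply Cmod_triangle. rewrite !Cmod_mult, HCS, !Cmod_R.
    rewrite (Rabs_pos_eq (x + 1)) by lra. rewrite (Rabs_pos_eq ((x + 1) * e - 1)) by lra.
    apply Rplus_le_compat.
    - apply Rmult_le_compat_l. lra. eapply Rle_trans. apply Hex. apply Rmult_le_compat_l. lra.
      apply pow_incr. split. apply Cmod_ge_0. auto.
    - apply Rmult_le_compat; try lra. apply Cmod_ge_0. }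
  apply Rle_trans with (((x + 1) * (12 * (A / x) ^ 2) + A * (1 / x)) / (x + 1))%R.
  { unfold Rdiv. apply Rmult_le_compat; auto. apply Cmod_ge_0.
    left; apply Rinv_0_lt_compat. pose proof (Cmod_ge_0 (w + Cnat (S m))). lra.
    apply Rinv_le_contravar; lra. }
  rewrite HS.
  replace (((x + 1) * (12 * (A / x) ^ 2) + A * (1 / x)) / (x + 1))%R
    with ((12 * A ^ 2 * (x + 1) + A * x) * / (x ^ 2 * (x + 1)))%R by (field; lra).
  replace (2 * (12 * A ^ 2 + A) / (x * (x + 1)))%R
    with ((2 * (12 * A ^ 2 + A) * x) * / (x ^ 2 * (x + 1)))%R by (field; lra).
  apply Rmult_le_compat_r. left; apply Rinv_0_lt_compat. apply Rmult_lt_0_compat. apply pow_lt; lra. lra.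
  assert (0 <= A ^ 2)%R by apply pow2_ge_0.
  nra.
Qed.

Lemma alg_id2 (w X E : C) : w + X <> 0 -> X <> 0 ->
  E - / (w + X) = (E - / X) + w / (X * (w + X)).
Proof. intros H1 H2. field. auto. Qed.

Lemma Lg_diff_bound (w : C) m A : (1 / 2 <= fst w)%R -> (Cmod w <= A)%R -> (1 <= m)%nat ->
  (Cmod (Lg (S m) w - Lg m w) <= (A + 1) / (INR m * INR (S m)))%R.
Proof.
  intros Hw HA Hm.
  rewrite Lg_S by (try apply poch_nz; try apply wS_nz; auto).
  replace (Lg m w + (RtoC (ln (INR (S m)) - ln (INR m)) - / (w + Cnat (S m))) - Lg m w)
    with (RtoC (ln (INR (S m)) - ln (INR m)) - / (w + Cnat (S m))) by ring.
  set (x := INR m) in *. assert (Hx : (1 <= x)%R) by (apply (le_INR 1); auto).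
  assert (HS : INR (S m) = (x + 1)%R) by (apply S_INR).
  assert (HCS : Cnat (S m) = RtoC (x + 1)) by (unfold Cnat; rewrite HS; auto).
  assert (He : (1 / (x + 1) <= ln (INR (S m)) - ln x <= 1 / x)%R) by (rewrite HS; apply eps_bounds; auto).
  set (e := (ln (INR (S m)) - ln x)%R) in *.
  assert (HwS : w + Cnat (S m) <> 0) by (apply wS_nz; auto).
  assert (HX : Cnat (S m) <> 0) by (apply Cnat_pos; lia).
  rewrite (alg_id2 w (Cnat (S m)) (RtoC e)) by auto.
  eapply Rle_trans. apply Cmod_triangle.
  rewrite HCS. rewrite <- RtoC_inv, <- RtoC_minus, Cmod_R.
  2:{ lra. }
  rewrite <- HCS. rewrite Cmod_div, Cmod_mult, Cmod_Cnat by (apply Cmult_neq0; auto).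
  pose proof (Cmod_wj_lb w (S m) Hw). rewrite HS in *.
  assert (HA0 : (0 <= A)%R) by (pose proof (Cmod_ge_0 w); lra).
  assert (Rabs (e - / (x + 1)) <= 1 / (x * (x + 1)))%R.
  { rewrite Rabs_pos_eq. replace (1 / (x * (x + 1)))%R with (1 / x - / (x + 1))%R by (field; lra).
    unfold Rdiv in He. lra. unfold Rdiv in He. lra. }
  assert (Cmod w / ((x + 1) * Cmod (w + Cnat (S m))) <= A / (x * (x + 1)))%R.
  { unfold Rdiv. apply Rmult_le_compat; auto. apply Cmod_ge_0.
    left; apply Rinv_0_lt_compat. apply Rmult_lt_0_compat; lra.
    apply Rinv_le_contravar. apply Rmult_lt_0_compat; lra.
    rewrite Rmult_comm. apply Rmult_le_compat; lra. }
  replace ((A + 1) / (x * (x + 1)))%R with (1 / (x * (x + 1)) + A / (x * (x + 1)))%R by (field; lra).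
  lra.
Qed.

Lemma tele (u : nat -> C) (K : R) (m0 : nat) : (1 <= m0)%nat ->
  (forall m, (m0 <= m)%nat -> (Cmod (u (S m) - u m) <= K / (INR m * INR (S m)))%R) ->
  forall k, (Cmod (u (m0 + k)%nat - u m0) <= K * (1 / INR m0 - 1 / INR (m0 + k)))%R.
Proof.
  intros Hm0 H k. induction k.
  - rewrite Nat.add_0_r. replace (u m0 - u m0) with (RtoC 0) by ring. rewrite Cmod_0. right; ring.
  - replace (u (m0 + S k)%nat - u m0) with ((u (S (m0 + k)) - u (m0 + k)%nat) + (u (m0 + k)%nat - u m0)).
    2:{ replace (m0 + S k)%nat with (S (m0 + k)) by lia. ring. }
    eapply Rle_trans. apply Cmod_triangle.
    specialize (H (m0 + k)%nat ltac:(lia)).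
    assert (Hp : (1 <= INR (m0 + k))%R) by (apply (le_INR 1); lia). assert (Hq : (1 <= INR m0)%R) by (apply (le_INR 1); lia).
    replace (m0 + S k)%nat with (S (m0 + k)) by lia. rewrite S_INR in *.
    replace (K * (1 / INR m0 - 1 / (INR (m0 + k) + 1)))%R with
      (K / (INR (m0 + k) * (INR (m0 + k) + 1)) + K * (1 / INR m0 - 1 / INR (m0 + k)))%R by (field; lra).
    lra.
Qed.

Lemma tele2 (u : nat -> C) (K : R) (m0 : nat) : (1 <= m0)%nat -> (0 <= K)%R ->
  (forall m, (m0 <= m)%nat -> (Cmod (u (S m) - u m) <= K / (INR m * INR (S m)))%R) ->
  forall p q, (m0 <= p)%nat -> (p <= q)%nat -> (Cmod (u q - u p) <= K / INR p)%R.
Proof.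
  intros Hm0 HK H p q Hp Hq.
  pose proof (tele u K p ltac:(lia) (fun m Hm => H m ltac:(lia)) (q - p)) as T.
  replace (p + (q - p))%nat with q in T by lia.
  eapply Rle_trans. apply T.
  assert (0 < INR q)%R by (apply (lt_INR 0); lia).
  assert (0 < 1 / INR q)%R by (apply Rdiv_lt_0_compat; lra).
  unfold Rdiv. rewrite Rmult_1_l. assert (K * / INR q >= 0)%R.
  { apply Rle_ge, Rmult_le_pos; auto. left; apply Rinv_0_lt_compat; auto. }
  replace (K * (/ INR p - / INR q))%R with (K * / INR p - K * / INR q)%R by ring. lra.
Qed.

Lemma unif_cauchy (u : C -> nat -> C) (K : R) (m0 : nat) (P : C -> Prop) : (1 <= m0)%nat -> (0 <= K)%R ->
  (forall w m, P w -> (m0 <= m)%nat -> (Cmod (u w (S m) - u w m) <= K / (INR m * INR (S m)))%R) ->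
  forall eps, (0 < eps)%R -> exists N, forall p q w, (N <= p)%nat -> (N <= q)%nat -> P w ->
     (Cmod (u w p - u w q) <= eps)%R.
Proof.
  intros Hm0 HK H eps He.
  destruct (nat_big (2 * K / eps)) as [N HN].
  exists (N + m0)%nat. intros p q w Hp Hq Hw.
  assert (HNm : (0 < INR (N + m0))%R) by (apply (lt_INR 0); lia).
  assert (HB : (2 * (K / INR (N + m0)) <= eps)%R).
  { rewrite plus_INR. pose proof (pos_INR m0). pose proof (pos_INR N).
    apply Rmult_le_reg_r with (INR N + INR m0)%R. rewrite <- plus_INR. auto.
    replace (2 * (K / (INR N + INR m0)) * (INR N + INR m0))%R with (2 * K)%R by (rewrite <- plus_INR in *; field; lra).
    assert (E1 : (2 * K / eps * eps = 2 * K)%R) by (field; lra).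
    assert (E2 : (2 * K / eps <= INR N + INR m0)%R) by lra.
    apply Rmult_le_compat_r with (r := eps) in E2; lra. }
  pose proof (tele2 (u w) K m0 Hm0 HK (fun m Hm => H w m Hw Hm)) as T.
  replace (u w p - u w q) with ((u w p - u w (N + m0)%nat) - (u w q - u w (N + m0)%nat)) by ring.
  eapply Rle_trans. unfold Cminus at 1. apply Cmod_triangle. rewrite Cmod_opp.
  assert (Cmod (u w p - u w (N + m0)%nat) <= K / INR (N + m0))%R by (apply T; lia).
  assert (Cmod (u w q - u w (N + m0)%nat) <= K / INR (N + m0))%R by (apply T; lia).
  lra.
Qed.

Lemma growth (u : nat -> C) (K : R) (m0 : nat) : (0 <= K)%R -> (1 <= m0)%nat ->
  (forall m, (m0 <= m)%nat -> (Cmod (u (S m)) <= Cmod (u m) * (1 + K / (INR m * INR (S m))))%R) ->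
  forall m, (m0 <= m)%nat -> (Cmod (u m) <= Cmod (u m0) * exp K)%R.
Proof.
  intros HK Hm0 H.
  assert (Hk : forall k, (Cmod (u (m0 + k)%nat) <= Cmod (u m0) * exp (K * (1 / INR m0 - 1 / INR (m0 + k))))%R).
  { induction k.
    - rewrite Nat.add_0_r. replace (K * (1 / INR m0 - 1 / INR m0))%R with 0%R by ring. rewrite exp_0. lra.
    - replace (m0 + S k)%nat with (S (m0 + k)) by lia.
      eapply Rle_trans. apply H. lia.
      assert (Hx : (1 <= INR (m0 + k))%R) by (apply (le_INR 1); lia).
      assert (Hq : (1 <= INR m0)%R) by (apply (le_INR 1); lia).
      rewrite S_INR.
      assert (E : (K * (1 / INR m0 - 1 / (INR (m0 + k) + 1)))%R =
                  (K * (1 / INR m0 - 1 / INR (m0 + k)) + K / (INR (m0 + k) * (INR (m0 + k) + 1)))%R) by (field; lra).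
      rewrite E, exp_plus, <- Rmult_assoc.
      apply Rmult_le_compat. apply Cmod_ge_0.
      assert (0 <= K / (INR (m0 + k) * (INR (m0 + k) + 1)))%R.
      { apply Rmult_le_pos; auto. left; apply Rinv_0_lt_compat. apply Rmult_lt_0_compat; lra. }
      lra. auto. apply exp_ineq1_le. }
  intros m Hm. replace m with (m0 + (m - m0))%nat by lia.
  eapply Rle_trans. apply Hk. apply Rmult_le_compat_l. apply Cmod_ge_0. apply exp_le_mono.
  assert (Hq : (1 <= INR m0)%R) by (apply (le_INR 1); lia).
  assert (Hx : (1 <= INR (m0 + (m - m0)))%R) by (apply (le_INR 1); lia).
  assert (0 < 1 / INR (m0 + (m - m0)))%R by (apply Rdiv_lt_0_compat; lra).
  assert (1 / INR m0 <= 1)%R.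
  { apply Rmult_le_reg_r with (INR m0). lra. unfold Rdiv. rewrite Rmult_assoc, Rinv_l by lra. lra. }
  rewrite <- (Rmult_1_r K) at 2. apply Rmult_le_compat_l; lra.
Qed.

Definition NiceAt (z : C) :=
  (exists d, (0 < d)%R /\ forall w, (Cmod (w - z) < d)%R -> GConv w) /\ exists L, isd CGamma z L.

Lemma ball_facts (z0 w : C) : (1 <= fst z0)%R -> (Cmod (w - z0) < 1 / 2)%R ->
  (1 / 2 <= fst w)%R /\ (Cmod w <= Cmod z0 + 1)%R.
Proof.
  intros H1 H2. split.
  - pose proof (re_le_Cmod' (w - z0)). simpl in H.
    replace (fst w + - fst z0)%R with (fst w - fst z0)%R in H by ring.
    pose proof (Rle_abs (- (fst w - fst z0))). rewrite Rabs_Ropp in H0. lra.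
  - pose proof (Cmod_triangle (w - z0) z0). replace (w - z0 + z0) with w in H by ring. lra.
Qed.

Lemma nice_main (z0 : C) : (1 <= fst z0)%R -> NiceAt z0.
Proof.
  intros Hz0.
  set (A := (Cmod z0 + 1)%R).
  assert (HA0 : (0 <= A)%R) by (unfold A; pose proof (Cmod_ge_0 z0); lra).
  set (B := fun w => (Cmod (w - z0) < 1 / 2)%R).
  assert (HB : forall w, B w -> (1 / 2 <= fst w)%R /\ (Cmod w <= A)%R) by (intros; apply ball_facts; auto).
  destruct (nat_big A) as [m1 Hm1]. set (m0 := S m1).
  assert (Hm0 : (1 <= m0)%nat) by (unfold m0; lia).
  assert (HAm : forall m, (m0 <= m)%nat -> (A <= INR m)%R).
  { intros m Hm. apply le_INR in Hm. unfold m0 in Hm. rewrite S_INR in Hm. lra. }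
  set (K := (2 * (12 * A ^ 2 + A))%R).
  assert (HK : (0 <= K)%R) by (unfold K; pose proof (pow2_ge_0 A); lra).
  set (C1 := (2 * exp (A * ln (INR m0)) * exp K)%R).
  assert (HSr : forall w m, B w -> (m0 <= m)%nat -> Gs (S m) w = Gs m w * rho m w).
  { intros w m Hw Hm. destruct (HB w Hw). apply Gs_S. lia. apply poch_nz; auto. apply wS_nz; auto. }
  assert (Hrho : forall w m, B w -> (m0 <= m)%nat -> (Cmod (rho m w - 1) <= K / (INR m * INR (S m)))%R).
  { intros w m Hw Hm. destruct (HB w Hw). apply rho_bound; auto. lia. }
  assert (HG : forall w m, B w -> (m0 <= m)%nat -> (Cmod (Gs m w) <= C1)%R).
  { intros w m Hw Hm. destruct (HB w Hw) as [Hw1 Hw2].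
    eapply Rle_trans. apply (growth (fun k => Gs k w) K m0); auto.
    - intros k Hk. rewrite HSr by auto. rewrite Cmod_mult. apply Rmult_le_compat_l. apply Cmod_ge_0.
      pose proof (Cmod_triangle (rho k w - 1) 1). replace (rho k w - 1 + 1) with (rho k w) in H by ring.
      rewrite Cmod_1 in H. specialize (Hrho w k Hw Hk). lra.
    - unfold C1. apply Rmult_le_compat_r. left; apply exp_pos. apply Gs_bound0; auto. }
  assert (HdG : forall w m, B w -> (m0 <= m)%nat ->
             (Cmod (Gs (S m) w - Gs m w) <= C1 * K / (INR m * INR (S m)))%R).
  { intros w m Hw Hm. rewrite HSr by auto.
    replace (Gs m w * rho m w - Gs m w) with (Gs m w * (rho m w - 1)) by ring.
    rewrite Cmod_mult. unfold Rdiv. rewrite Rmult_assoc. apply Rmult_le_compat. apply Cmod_ge_0. apply Cmod_ge_0.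
    auto. apply Hrho; auto. }
  set (KL := (A + 1)%R).
  assert (HdL : forall w m, B w -> (m0 <= m)%nat -> (Cmod (Lg (S m) w - Lg m w) <= KL / (INR m * INR (S m)))%R).
  { intros w m Hw Hm. destruct (HB w Hw). apply Lg_diff_bound; auto. lia. }
  set (C2 := (ln (INR m0) + 2 * INR (S m0) + KL)%R).
  assert (HL : forall w m, B w -> (m0 <= m)%nat -> (Cmod (Lg m w) <= C2)%R).
  { intros w m Hw Hm. destruct (HB w Hw) as [Hw1 Hw2].
    pose proof (tele2 (fun k => Lg k w) KL m0 Hm0 ltac:(unfold KL; lra) (fun k Hk => HdL w k Hw Hk) m0 m (le_n _) Hm) as T.
    cbv beta in T.
    assert (T2 : (Cmod (Lg m0 w) <= ln (INR m0) + 2 * INR (S m0))%R).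
    { unfold Lg. eapply Rle_trans. unfold Cminus. apply Cmod_triangle. rewrite Cmod_opp, Cmod_R.
      assert (0 <= ln (INR m0))%R. { rewrite <- ln_1. apply ln_le. lra. apply (le_INR 1). auto. }
      rewrite Rabs_pos_eq by auto. pose proof (Dp_bound w m0 Hw1). lra. }
    assert (KL / INR m0 <= KL)%R.
    { assert (1 <= INR m0)%R by (apply (le_INR 1); auto). unfold Rdiv.
      rewrite <- (Rmult_1_r KL) at 2. apply Rmult_le_compat_l. unfold KL; lra.
      rewrite <- Rinv_1. apply Rinv_le_contravar; lra. }
    pose proof (Cmod_triangle (Lg m w - Lg m0 w) (Lg m0 w)) as T3. replace (Lg m w - Lg m0 w + Lg m0 w) with (Lg m w) in T3 by ring.
    unfold C2. lra. }
  assert (HC1 : (0 <= C1)%R).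
  { unfold C1. apply Rmult_le_pos. apply Rmult_le_pos. lra. left; apply exp_pos. left; apply exp_pos. }
  assert (HC2 : (0 <= C2)%R).
  { eapply Rle_trans. apply (Cmod_ge_0 (Lg m0 z0)). apply HL. unfold B. replace (z0 - z0) with (RtoC 0) by ring. rewrite Cmod_0. lra. auto. }
  assert (HdGL : forall w m, B w -> (m0 <= m)%nat ->
             (Cmod (Gs (S m) w * Lg (S m) w - Gs m w * Lg m w) <= C1 * (K * C2 + KL) / (INR m * INR (S m)))%R).
  { intros w m Hw Hm. rewrite HSr by auto.
    replace (Gs m w * rho m w * Lg (S m) w - Gs m w * Lg m w)
      with (Gs m w * ((rho m w - 1) * Lg (S m) w + (Lg (S m) w - Lg m w))) by ring.
    rewrite Cmod_mult. assert (Hp : (0 < INR m * INR (S m))%R).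
    { apply Rmult_lt_0_compat; apply (lt_INR 0); lia. }
    assert (0 < INR m)%R by (apply (lt_INR 0); lia). assert (0 < INR (S m))%R by (apply (lt_INR 0); lia).
    replace (C1 * (K * C2 + KL) / (INR m * INR (S m)))%R with (C1 * (K / (INR m * INR (S m)) * C2 + KL / (INR m * INR (S m))))%R by (field; lra).
    apply Rmult_le_compat. apply Cmod_ge_0. apply Cmod_ge_0. auto.
    eapply Rle_trans. apply Cmod_triangle. apply Rplus_le_compat; auto.
    rewrite Cmod_mult. apply Rmult_le_compat; try apply Cmod_ge_0; auto. }
  assert (UG := unif_cauchy (fun w m => Gs m w) (C1 * K) m0 B Hm0 ltac:(apply Rmult_le_pos; auto)
                  (fun w m Hw Hm => HdG w m Hw Hm)).
  assert (UGL := unif_cauchy (fun w m => Gs m w * Lg m w) (C1 * (K * C2 + KL)) m0 B Hm0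
                  ltac:(apply Rmult_le_pos; auto; apply Rplus_le_le_0_compat; [apply Rmult_le_pos; auto| unfold KL; lra])
                  (fun w m Hw Hm => HdGL w m Hw Hm)).
  assert (Hconv : forall w, B w -> GConv w).
  { intros w Hw. destruct (C_cauchy (fun m => Gs m w)) as [l Hl].
    { intros eps He. destruct (UG eps He) as [N HN]. exists N. intros p q Hp Hq. apply (HN p q w); auto. }
    exists l; auto. }
  split.
  - exists (1 / 2)%R. split. lra. intros w Hw. apply Hconv. apply Hw.
  - apply (DL (fun k => Gs (k + m0)) (fun k w => Gs (k + m0) w * Lg (k + m0) w) CGamma z0 (1 / 2)).
    + lra.
    + intros m w Hw. apply Cd_Gs. apply poch_nz. apply (HB w Hw).
    + intros w Hw. apply (Cseq_lim_shift' (fun m => Gs m w)). apply GConv_lim. apply Hconv. apply Hw.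
    + intros eps He. destruct (UGL eps He) as [N HN]. exists N. intros p q w Hp Hq Hw.
      apply (HN (p + m0)%nat (q + m0)%nat w); auto; lia.
Qed.

Lemma Cd_ext_loc (f g : C -> C) z l :
  (exists d, (0 < d)%R /\ forall y, (Cmod (y - z) < d)%R -> f y = g y) -> isd f z l -> isd g z l.
Proof.
  intros [d [Hd E]] H. apply C_der_iff. intros eps He.
  destruct (proj1 (C_der_iff _ _ _) H eps He) as [d1 [Hd1 H1]].
  exists (Rmin d d1). split. apply Rmin_glb_lt; auto. intros y Hy.
  assert (Hz : f z = g z). { apply E. replace (z - z) with (RtoC 0) by ring. rewrite Cmod_0. auto. }
  rewrite <- E, <- Hz. apply H1. eapply Rlt_le_trans. apply Hy. apply Rmin_r.
  eapply Rlt_le_trans. apply Hy. apply Rmin_l.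
Qed.

Lemma nice_down (z : C) : z <> 0 -> NiceAt (z + 1) -> NiceAt z.
Proof.
  intros Hz [[d [Hd Hc]] [L HL]].
  assert (Hmz : (0 < Cmod z)%R) by (apply Cmod_gt_0; auto).
  set (d' := Rmin d (Cmod z)).
  assert (Hd' : (0 < d')%R) by (apply Rmin_glb_lt; auto).
  assert (Hball : forall w, (Cmod (w - z) < d')%R -> w <> 0 /\ GConv (w + 1)).
  { intros w Hw. split.
    - intro E. subst. replace (0 - z) with (- z) in Hw by ring. rewrite Cmod_opp in Hw.
      pose proof (Rmin_r d (Cmod z)). unfold d' in Hw. lra.
    - apply Hc. replace (w + 1 - (z + 1)) with (w - z) by ring. eapply Rlt_le_trans. apply Hw. apply Rmin_l. }
  split.
  - exists d'. split; auto. intros w Hw. destruct (Hball w Hw). apply Gamma_pred; auto.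
  - exists ((1 + 0) * L * / z + CGamma (z + 1) * (- (/ z * / z))).
    apply (Cd_ext_loc (fun v => CGamma (v + 1) * / v)).
    { exists d'. split; auto. intros y Hy. destruct (Hball y Hy). symmetry.
      destruct (Gamma_pred y H H0) as [E _]. rewrite E. unfold Cdiv. reflexivity. }
    apply (Cd_mul (fun v => CGamma (v + 1)) Cinv z ((1 + 0) * L) (- (/ z * / z))).
    + apply (Cd_comp CGamma (fun v => v + 1)). exact HL. apply Cd_add. apply Cd_id. apply Cd_const.
    + apply is_derive_Cinv; auto.
Qed.

Definition good (z : C) := forall j, z + Cnat j <> 0.

Lemma good_S z : good z -> good (z + 1).
Proof. intros H j. replace (z + 1 + Cnat j) with (z + Cnat (S j)) by (rewrite Cnat_S; ring). apply H. Qed.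

Lemma good_nz z : good z -> z <> 0.
Proof. intros H E. apply (H 0%nat). rewrite E, Cnat_0. ring. Qed.

Lemma nice_all_N N : forall z, good z -> (1 <= fst z + INR N)%R -> NiceAt z.
Proof.
  induction N; intros z Hg Hf.
  - apply nice_main. simpl in Hf. lra.
  - apply nice_down. apply good_nz; auto. apply IHN. apply good_S; auto.
    rewrite S_INR in Hf. simpl. lra.
Qed.

Lemma nice_all z : good z -> NiceAt z.
Proof.
  intros Hg. destruct (nat_big (1 - fst z)) as [N HN]. apply (nice_all_N N); auto. lra.
Qed.

Lemma good_conv z : good z -> GConv z.
Proof.
  intros Hg. destruct (nice_all z Hg) as [[d [Hd Hc]] _]. apply Hc.
  replace (z - z) with (RtoC 0) by ring. rewrite Cmod_0. auto.
Qed.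

Lemma Cderiv_eq f z L : isd f z L -> Cderiv f z = L.
Proof.
  intros H. unfold Cderiv.
  pose proof (epsilon_spec (inhabits (RtoC 0)) (fun l => isd f z l) (ex_intro _ L H)) as Hs.
  cbv beta in Hs.
  rewrite <- (is_C_derive_unique f z _ Hs). apply is_C_derive_unique. auto.
Qed.

Lemma psi_succ z : good z -> CGamma z <> 0 -> digamma (z + 1) = digamma z + / z.
Proof.
  intros Hg HG. pose proof (good_nz z Hg) as Hz.
  destruct (nice_all z Hg) as [[d [Hd Hc]] [L HL]].
  assert (Hmz : (0 < Cmod z)%R) by (apply Cmod_gt_0; auto).
  set (d' := Rmin d (Cmod z)).
  assert (Hd' : (0 < d')%R) by (apply Rmin_glb_lt; auto).
  assert (Hloc : forall y, (Cmod (y - (z + 1)) < d')%R -> CGamma y = (y - 1) * CGamma (y - 1)).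
  { intros y Hy. assert (Hw : (Cmod ((y - 1) - z) < d')%R) by (replace (y - 1 - z) with (y - (z + 1)) by ring; auto).
    assert (y - 1 <> 0).
    { intro E. rewrite E in Hw. replace (0 - z) with (- z) in Hw by ring. rewrite Cmod_opp in Hw.
      pose proof (Rmin_r d (Cmod z)). unfold d' in Hw. lra. }
    assert (GConv (y - 1)). { apply Hc. eapply Rlt_le_trans. apply Hw. apply Rmin_l. }
    destruct (Gamma_succ (y - 1) H H0) as [E _]. replace (y - 1 + 1) with y in E by ring. auto. }
  assert (HD : isd CGamma (z + 1) ((1 - 0) * CGamma z + z * ((1 - 0) * L))).
  { apply (Cd_ext_loc (fun y => (y - 1) * CGamma (y - 1))).
    { exists d'. split; auto. intros y Hy. symmetry. apply Hloc. auto. }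
    pose proof (Cd_mul (fun y => y - 1) (fun y => CGamma (y - 1)) (z + 1) (1 - 0) ((1 - 0) * L)
       (Cd_sub _ _ _ _ _ (Cd_id _) (Cd_const _ _))) as M.
    eapply Cd_ext; [intros; reflexivity | | apply M].
    { cbv beta. replace (z + 1 - 1) with z by ring. reflexivity. }
    apply (Cd_comp CGamma (fun y => y - 1)). replace (z + 1 - 1) with z by ring. auto.
    apply Cd_sub. apply Cd_id. apply Cd_const. }
  assert (HG1 : CGamma (z + 1) = z * CGamma z) by (apply Gamma_succ; auto; apply good_conv; auto).
  unfold digamma. rewrite (Cderiv_eq _ _ _ HD), (Cderiv_eq _ _ _ HL), HG1.
  field. auto.
Qed.


Local Open Scope C_scope.

Fixpoint rise (z : C) (j : nat) : C :=
  match j with O => 1 | S j' => rise z j' * (z + Cnat j') end.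

Fixpoint hsum (z : C) (j : nat) : C :=
  match j with O => 0 | S j' => hsum z j' + / (z + Cnat j') end.

Lemma good_plus z j : good z -> good (z + Cnat j).
Proof.
  intros H i. replace (z + Cnat j + Cnat i) with (z + Cnat (j + i)).
  apply H. unfold Cnat. rewrite plus_INR, RtoC_plus. ring.
Qed.

Lemma rise_nz z j : good z -> rise z j <> 0.
Proof.
  intros H. induction j. simpl. intro E. apply (f_equal fst) in E. simpl in E. lra.
  simpl. apply Cmult_neq0; auto.
Qed.

Lemma Gamma_rise z j : good z -> CGamma (z + Cnat j) = rise z j * CGamma z.
Proof.
  intros H. induction j.
  - rewrite Cnat_0, Cplus_0_r. simpl. ring.
  - replace (z + Cnat (S j)) with ((z + Cnat j) + 1) by (rewrite Cnat_S; ring).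
    destruct (Gamma_succ (z + Cnat j)) as [E _]. apply H. apply good_conv. apply good_plus; auto.
    rewrite E, IHj. simpl. ring.
Qed.

Lemma Gam_at z j w : good z -> w = z + Cnat j -> CGamma w = rise z j * CGamma z.
Proof. intros H ->. apply Gamma_rise; auto. Qed.

Lemma psi_rise z j : good z -> CGamma z <> 0 -> digamma (z + Cnat j) = digamma z + hsum z j.
Proof.
  intros H HG. induction j.
  - rewrite Cnat_0, Cplus_0_r. simpl. ring.
  - replace (z + Cnat (S j)) with ((z + Cnat j) + 1) by (rewrite Cnat_S; ring).
    rewrite psi_succ. rewrite IHj. simpl. ring.
    apply good_plus; auto. rewrite Gamma_rise by auto. apply Cmult_neq0; auto. apply rise_nz; auto.
Qed.

Lemma psi_at z j w : good z -> CGamma z <> 0 -> w = z + Cnat j -> digamma w = digamma z + hsum z j.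
Proof. intros H HG ->. apply psi_rise; auto. Qed.

Lemma Cinv_inv_gen (b : C) : / / b = b.
Proof.
  destruct (Ceq_dec b 0) as [->|Hb]. rewrite !Cinv_0. reflexivity. field. auto.
Qed.

Lemma term_id (F Gr Gs Ga Rn Rk Rm sk : C) : sk <> 0 -> Rn <> 0 ->
  Cdiv F (sk * Cdiv (Rn * Gr) (Rk * sk * Gs * (Rm * Ga))) = F * (Gs * Ga * / Gr * (Rk * Rm / Rn)).
Proof.
  intros H1 H2. unfold Cdiv. rewrite !Cinv_mult_gen, !Cinv_inv_gen.
  generalize (/ Gr). intros iG. field. auto.
Qed.

Definition Phi (s a R1 : C) (k m : nat) : C := rise s k * rise a m / rise R1 (k + m).
Definition Phi' (s a R1 : C) (k m : nat) : C :=
  Phi s a R1 k m * (hsum a m - hsum R1 (k + m)).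

Lemma Cnat_plus a b : Cnat (a + b) = Cnat a + Cnat b.
Proof. unfold Cnat. rewrite plus_INR, RtoC_plus. reflexivity. Qed.

Lemma Phi_S_m s a R1 k m : Phi s a R1 k (S m) =
  rise s k * (rise a m * (a + Cnat m)) / (rise R1 (k + m) * (R1 + Cnat (k + m))).
Proof. unfold Phi. rewrite Nat.add_succ_r. reflexivity. Qed.

Lemma Phi_S_k s a R1 k m : Phi s a R1 (S k) m =
  rise s k * (s + Cnat k) * rise a m / (rise R1 (k + m) * (R1 + Cnat (k + m))).
Proof. unfold Phi. simpl. reflexivity. Qed.

Lemma alg_rec (X Y Z s a R1 c d : C) : a = R1 - s -> Z <> 0 -> R1 + (c + d) <> 0 ->
  X * (Y * (a + d)) / (Z * (R1 + (c + d))) = X * Y / Z - X * (s + c) * Y / (Z * (R1 + (c + d))).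
Proof. intros -> H1 H2. field. auto. Qed.

Lemma alg_rec' (X Y Z s a R1 c d h1 h2 : C) : a = R1 - s -> Z <> 0 -> R1 + (c + d) <> 0 -> a + d <> 0 ->
  X * (Y * (a + d)) / (Z * (R1 + (c + d))) * (h1 + / (a + d) - (h2 + / (R1 + (c + d)))) =
  X * Y / Z * (h1 - h2) - X * (s + c) * Y / (Z * (R1 + (c + d))) * (h1 - (h2 + / (R1 + (c + d)))).
Proof. intros -> H1 H2 H3. field. auto. Qed.

Lemma Phi_rec s a R1 : a = R1 - s -> good R1 -> Rec (Phi s a R1).
Proof.
  intros Ha HR k m. rewrite Phi_S_m, Phi_S_k. unfold Phi.
  rewrite Cnat_plus. apply alg_rec; auto. apply rise_nz; auto.
  rewrite <- Cnat_plus. apply HR.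
Qed.

Lemma Phi'_rec s a R1 : a = R1 - s -> good R1 -> good a -> Rec (Phi' s a R1).
Proof.
  intros Ha HR HA k m. unfold Phi'. rewrite Phi_S_m, Phi_S_k. unfold Phi.
  rewrite Nat.add_succ_r. simpl hsum. simpl (S k + m)%nat. simpl hsum.
  rewrite Cnat_plus. apply alg_rec'; auto. apply rise_nz; auto.
  rewrite <- Cnat_plus. apply HR.
Qed.

Lemma Harm_at z j w : good z -> CGamma z <> 0 -> w + 1 = z + Cnat j ->
  Harm w = digamma z + hsum z j + RtoC euler_gamma.
Proof. intros H1 H2 E. unfold Harm. rewrite (psi_at z j (w + 1)); auto. Qed.

Theorem lemma6 (n l1 u1 l2 u2 : nat) (f g : nat -> C)
  (Hu1 : (u1 <= n)%nat)
  (Hid : forall t : C,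
     sum_n_m (fun k => Cmult (Cmult (f k) (@pow_n C_Ring t k))
                             (@pow_n C_Ring (Cminus (RtoC 1) t) (n - k))) l1 u1
     = sum_n_m (fun k => Cmult (g k) (@pow_n C_Ring t k)) l2 u2)
  (r s : C) (Hr : not_neg_int r) (Hs : not_neg_int s) (Hs0 : s <> RtoC 0)
  (Hrs : not_neg_int (Cminus r s)) :
  sum_n_m (fun k => Cdiv (f k)
             (Cmult (Cplus (Cnat k) s) (Cbinom (Cplus (Cnat n) r) (Cplus (Cnat k) s)))) l1 u1
  = sum_n_m (fun k => Cdiv (g k)
             (Cmult (Cplus (Cnat k) s) (Cbinom (Cplus (Cnat k) r) (Cplus (Cnat k) s)))) l2 u2
  /\
  sum_n_m (fun k => Cmult (f k)
             (Cdiv (Cminus (Harm (Cplus (Cnat (n - k)) (Cminus r s))) (Harm (Cplus (Cnat n) r)))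
                   (Cmult (Cplus (Cnat k) s) (Cbinom (Cplus (Cnat n) r) (Cplus (Cnat k) s))))) l1 u1
  = sum_n_m (fun k => Cmult (g k)
             (Cdiv (Cminus (Harm (Cminus r s)) (Harm (Cplus (Cnat k) r)))
                   (Cmult (Cplus (Cnat k) s) (Cbinom (Cplus (Cnat k) r) (Cplus (Cnat k) s))))) l2 u2.
Proof.
  set (a := r - s + 1). set (R1 := r + 1).
  assert (HaR : a = R1 - s) by (unfold a, R1; ring).
  assert (neg_aux : forall z j, z + Cnat (S j) = 0 -> z = Copp (Cnat (S j))).
  { intros z j E. transitivity (z + Cnat (S j) - Cnat (S j)). ring. rewrite E. ring. }
  assert (Hgs : good s).
  { intros [|j]. rewrite Cnat_0, Cplus_0_r. auto. intro E. apply (Hs j). apply neg_aux; auto. }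
  assert (HgR : good R1).
  { intros j E. apply (Hr j). apply neg_aux. rewrite Cnat_S. rewrite <- E. unfold R1. ring. }
  assert (Hga : good a).
  { intros j E. apply (Hrs j). apply neg_aux. rewrite Cnat_S. rewrite <- E. unfold a. ring. }
  set (c0 := CGamma s * CGamma a * / CGamma R1).
  assert (TL : forall F k, (k <= n)%nat ->
    Cdiv F (Cmult (Cplus (Cnat k) s) (Cbinom (Cplus (Cnat n) r) (Cplus (Cnat k) s))) =
    F * (c0 * Phi s a R1 k (n - k))).
  { intros F k Hk. unfold Cbinom.
    rewrite (Gam_at R1 n (Cnat n + r + 1)) by (auto; unfold R1; ring).
    rewrite (Gam_at s (S k) (Cnat k + s + 1)) by (auto; rewrite Cnat_S; ring).
    rewrite (Gam_at a (n - k) (Cnat n + r - (Cnat k + s) + 1)).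
    2: auto.
    2:{ unfold Cnat. rewrite minus_INR by auto. rewrite RtoC_minus. unfold a. ring. }
    simpl rise. replace (Cnat k + s) with (s + Cnat k) by ring.
    rewrite term_id. 2: apply Hgs. 2: apply rise_nz; auto.
    unfold c0, Phi. replace (k + (n - k))%nat with n by lia. unfold Cdiv. ring. }
  assert (TR : forall F k,
    Cdiv F (Cmult (Cplus (Cnat k) s) (Cbinom (Cplus (Cnat k) r) (Cplus (Cnat k) s))) =
    F * (c0 * Phi s a R1 k 0)).
  { intros F k. unfold Cbinom.
    rewrite (Gam_at R1 k (Cnat k + r + 1)) by (auto; unfold R1; ring).
    rewrite (Gam_at s (S k) (Cnat k + s + 1)) by (auto; rewrite Cnat_S; ring).
    rewrite (Gam_at a 0 (Cnat k + r - (Cnat k + s) + 1)).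
    2: auto.
    2:{ rewrite Cnat_0. unfold a. ring. }
    simpl rise. replace (Cnat k + s) with (s + Cnat k) by ring.
    rewrite term_id. 2: apply Hgs. 2: apply rise_nz; auto.
    unfold c0, Phi. rewrite Nat.add_0_r. simpl rise. unfold Cdiv. ring. }
  assert (HRec := Phi_rec s a R1 HaR HgR).
  split.
  - transitivity (c0 * sum_n_m (fun k => f k * Phi s a R1 k (n - k)%nat) l1 u1).
    { rewrite <- S_mult_l. apply S_ext_loc. intros k Hk. rewrite TL by lia. ring. }
    rewrite (transfer n l1 u1 l2 u2 f g Hu1 Hid _ HRec).
    rewrite <- S_mult_l. apply S_ext. intros k. rewrite TR. ring.
  - destruct (Ceq_dec c0 0) as [Hc0|Hc0].
    + rewrite S_zero. rewrite S_zero. reflexivity.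
      * intros k _. rewrite TR, Hc0. ring.
      * intros k Hk. rewrite TL, Hc0 by lia. ring.
    + assert (HGs : CGamma s <> 0). { intro E. apply Hc0. unfold c0. rewrite E. ring. }
      assert (HGa : CGamma a <> 0). { intro E. apply Hc0. unfold c0. rewrite E. ring. }
      assert (HGR : CGamma R1 <> 0). { intro E. apply Hc0. unfold c0. rewrite E, Cinv_0. ring. }
      set (D0 := digamma a - digamma R1).
      set (Psi := fun k m => D0 * Phi s a R1 k m + Phi' s a R1 k m).
      assert (HRec' : Rec Psi).
      { intros k m. unfold Psi. rewrite HRec, (Phi'_rec s a R1 HaR HgR Hga). ring. }
      transitivity (c0 * sum_n_m (fun k => f k * Psi k (n - k)%nat) l1 u1).
      { rewrite <- S_mult_l. apply S_ext_loc. intros k Hk. rewrite TL by lia.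
        rewrite (Harm_at a (n - k) (Cnat (n - k) + (r - s))) by (auto; unfold a; ring).
        rewrite (Harm_at R1 n (Cnat n + r)) by (auto; unfold R1; ring).
        unfold Psi, Phi', D0. replace (k + (n - k))%nat with n by lia. ring. }
      rewrite (transfer n l1 u1 l2 u2 f g Hu1 Hid _ HRec').
      rewrite <- S_mult_l. apply S_ext. intros k. rewrite TR.
      rewrite (Harm_at a 0 (r - s)) by (auto; rewrite Cnat_0; unfold a; ring).
      rewrite (Harm_at R1 k (Cnat k + r)) by (auto; unfold R1; ring).
      unfold Psi, Phi', D0. rewrite Nat.add_0_r. simpl hsum. ring.
Qed.
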